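(* Let $u$ and $v$ be two prime words such that $u<_{lex}v$. Then $u^\alpha v$ is a prime word for every ordinal $\alpha$.
   Context: $A$ is a finite alphabet with a linear order $<_A$. Words are sequences of letters indexed by countable ordinals; $x^\alpha$ is the concatenation of $\alpha$ copies of $x$. A prefix of $x$ is $x[0,\gamma)$, a suffix is $x[\gamma,|x|)$ ($0\le\gamma\le|x|$), proper if $0<\gamma<|x|$. Write $x<_{str}x'$ if there are letters $a<_Ab$ and words $y,z,z'$ with $x=yaz$, $x'=ybz'$; $x\le_{lex}x'$ iff $x$ is a prefix of $x'$ or $x<_{str}x'$; $<_{lex}$ is its strict version. A word $x$ is primitive if $x=y^\alpha$ implies $\alpha=1$ and $y=x$. A word $w$ is prime if it is primitive and every proper suffix $z$ of $w$ satisfies $w\le_{lex}z$. *)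

(* Defs.v *)
From mathcomp Require Import all_boot all_order.
Set Implicit Arguments. Unset Strict Implicit. Unset Printing Implicit Defensive.
Import Order.TTheory.

(* A (raw) transfinite word over A: a type of positions with an order
   relation and a labelling.  Genuine words are those satisfying [is_word]:
   the order is a strict well-order and the position set is countable, i.e.
   positions are indexed by a countable ordinal.  Words are identified up to
   label-preserving order isomorphism ([weq]). *)
Record rword (A : Type) := RWord {
  pos : Type;
  plt : pos -> pos -> Prop;
  lbl : pos -> A }.

Definition is_word (A : Type) (x : rword A) : Prop :=
  (forall p : pos x, ~ plt p p) /\
  (forall p q r : pos x, plt p q -> plt q r -> plt p r) /\
  (forall p q : pos x, plt p q \/ p = q \/ plt q p) /\
  well_founded (@plt A x) /\
  (exists f : pos x -> nat, forall p q, f p = f q -> p = q).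

(* Countable ordinals = genuine words over the one-letter alphabet unit. *)
Definition cordinal := rword unit.

Definition weq (A : Type) (x y : rword A) : Prop :=
  exists (f : pos x -> pos y) (g : pos y -> pos x),
    (forall p, g (f p) = p) /\ (forall q, f (g q) = q) /\
    (forall p q, plt p q <-> plt (f p) (f q)) /\
    (forall p, lbl (f p) = lbl p).

Definition concat (A : Type) (x y : rword A) : rword A :=
  @RWord A (pos x + pos y)%type
    (fun s t => match s, t with
                | inl p, inl q => plt p q
                | inl _, inr _ => True
                | inr _, inl _ => False
                | inr p, inr q => plt p q
                end)
    (fun s => match s with inl p => lbl p | inr q => lbl q end).

Definition letter (A : Type) (a : A) : rword A :=
  @RWord A unit (fun _ _ => False) (fun _ => a).

Definition ord_one : cordinal := letter tt.

Definition nonempty (A : Type) (x : rword A) : Prop := inhabited (pos x).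

(* x^alpha : concatenation of alpha copies of x (lexicographic order on
   alpha x |x|, copy index first). *)
Definition wpow (A : Type) (x : rword A) (alpha : cordinal) : rword A :=
  @RWord A (pos alpha * pos x)%type
    (fun s t => plt s.1 t.1 \/ (s.1 = t.1 /\ plt s.2 t.2))
    (fun s => lbl s.2).

Definition wprefix (A : Type) (x x' : rword A) : Prop :=
  exists z, is_word z /\ weq x' (concat x z).

(* z is a proper suffix of w : w = y z with y, z nonempty
   (i.e. z = w[gamma,|w|) with 0 < gamma < |w|). *)
Definition proper_suffix (A : Type) (z w : rword A) : Prop :=
  exists y, is_word y /\ nonempty y /\ nonempty z /\ weq w (concat y z).

Section Lex.
Context {d : Order.disp_t} {A : orderType d}.

Definition str_lt (x x' : rword A) : Prop :=
  exists (y z z' : rword A) (a b : A),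
    is_word y /\ is_word z /\ is_word z' /\ (a < b)%O /\
    weq x (concat y (concat (letter a) z)) /\
    weq x' (concat y (concat (letter b) z')).

Definition lex_le (x x' : rword A) : Prop := wprefix x x' \/ str_lt x x'.
Definition lex_lt (x x' : rword A) : Prop := lex_le x x' /\ ~ weq x x'.

Definition primitive (x : rword A) : Prop :=
  forall (y : rword A) (alpha : cordinal), is_word y -> is_word alpha ->
    weq x (wpow y alpha) -> weq alpha ord_one /\ weq y x.

Definition prime_word (w : rword A) : Prop :=
  primitive w /\ forall z, is_word z -> proper_suffix z w -> lex_le w z.
End Lex.

(* Main.v *)
Require Import Defs.
From mathcomp Require Import all_boot all_order.
From mathcomp Require Import zify.
From Stdlib Require Import Classical ClassicalEpsilon FunctionalExtensionality ProofIrrelevance Cantor.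
Set Implicit Arguments. Unset Strict Implicit. Unset Printing Implicit Defensive.

Section Gen.
Variable L : Type.
Implicit Types x y z : rword L.

Lemma weq_refl x : weq x x.
Proof. exists id, id. repeat split; auto. Qed.

Lemma weq_sym x y : weq x y -> weq y x.
Proof.
intros [f [g [H1 [H2 [H3 H4]]]]]. exists g, f. repeat split; auto.
- intros Hp. apply H3. rewrite !H2. exact Hp.
- intros Hp. apply H3 in Hp. rewrite !H2 in Hp. exact Hp.
- intros q0. rewrite <- (H4 (g q0)). rewrite H2. reflexivity.
Qed.

Lemma weq_trans x y z : weq x y -> weq y z -> weq x z.
Proof.
intros [f [g [H1 [H2 [H3 H4]]]]] [f' [g' [H1' [H2' [H3' H4']]]]].
exists (fun p0 => f' (f p0)), (fun q0 => g (g' q0)). repeat split.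
- intros; rewrite H1' H1; auto.
- intros; rewrite H2 H2'; auto.
- intros Hp. apply H3', H3, Hp.
- intros Hp. apply H3, H3', Hp.
- intros; rewrite H4' H4; auto.
Qed.

Lemma w_irr x : is_word x -> forall p : pos x, ~ plt p p.
Proof. intros [H _]; exact H. Qed.
Lemma w_tr x : is_word x -> forall p q r : pos x, plt p q -> plt q r -> plt p r.
Proof. intros [_ [H _]]; exact H. Qed.
Lemma w_tot x : is_word x -> forall p q : pos x, plt p q \/ p = q \/ plt q p.
Proof. intros [_ [_ [H _]]]; exact H. Qed.
Lemma w_wf x : is_word x -> well_founded (@plt L x).
Proof. intros [_ [_ [_ [H _]]]]; exact H. Qed.

Lemma w_min x (P : pos x -> Prop) : is_word x -> (exists p, P p) ->
  exists m, P m /\ forall q, P q -> ~ plt q m.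
Proof.
intros Hw [p Hp]. revert Hp. pattern p. apply (well_founded_ind (w_wf Hw)).
intros p0 IH Hp0. destruct (classic (exists q, P q /\ plt q p0)) as [[q [Hq Hqp]]|Hn].
- exact (IH q Hqp Hq).
- exists p0; split; auto. intros q Hq Hlt. apply Hn; eauto.
Qed.

Lemma weq_ms x y (f : pos x -> pos y) : is_word x -> is_word y ->
  (forall p q, plt p q -> plt (f p) (f q)) ->
  (forall q, exists p, f p = q) -> (forall p, lbl (f p) = lbl p) -> weq x y.
Proof.
intros Hx Hy Hm Hs Hl.
assert (Hinj : forall p q, f p = f q -> p = q).
{ intros p q E. destruct (w_tot Hx p q) as [H|[H|H]]; auto.
  - apply Hm in H. rewrite E in H. exfalso; exact (w_irr Hy H).
  - apply Hm in H. rewrite E in H. exfalso; exact (w_irr Hy H). }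
pose g := fun q => proj1_sig (constructive_indefinite_description _ (Hs q)).
assert (Hg : forall q, f (g q) = q).
{ intros q. unfold g. destruct (constructive_indefinite_description _ (Hs q)); auto. }
exists f, g. split; [|split; [|split]]; auto.
intros p q; split; [apply Hm|]. intros H. destruct (w_tot Hx p q) as [H'|[H'|H']]; auto.
- subst. exfalso; exact (w_irr Hy H).
- apply Hm in H'. exfalso; exact (w_irr Hy (w_tr Hy H H')).
Qed.

Definition wempty : rword L := @RWord L Empty_set (fun _ _ => False) (fun e => match e with end).
Definition empty x := pos x -> False.

Lemma is_word_empty x : empty x -> is_word x.
Proof.
intros E. split; [|split; [|split; [|split]]].
- intros p; destruct (E p).
- intros p; destruct (E p).
- intros p; destruct (E p).
- intros p; destruct (E p).
- exists (fun _ => 0). intros p; destruct (E p).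
Qed.

Lemma is_word_letter (a : L) : is_word (letter a).
Proof.
split; [|split; [|split; [|split]]]; simpl.
- intros p H; exact H.
- intros p q r H; destruct H.
- intros p q; destruct p, q; auto.
- intros p; constructor; intros q H; destruct H.
- exists (fun _ => 0). intros [] [] _; auto.
Qed.

Lemma is_word_concat x y : is_word x -> is_word y -> is_word (concat x y).
Proof.
intros Hx Hy. split; [|split; [|split; [|split]]].
- intros [p|p]; simpl; [apply (w_irr Hx)|apply (w_irr Hy)].
- intros [p|p] [q|q] [r|r]; simpl; auto; try tauto; [apply (w_tr Hx)|apply (w_tr Hy)].
- intros [p|p] [q|q]; simpl; auto.
  + destruct (w_tot Hx p q) as [H|[H|H]]; subst; auto.
  + destruct (w_tot Hy p q) as [H|[H|H]]; subst; auto.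
- assert (Hr : forall q : pos y, Acc (@plt L (concat x y)) (inr q)).
  { intros q. pattern q; apply (well_founded_ind (w_wf Hy)). intros q0 IH.
    constructor. intros [p|p] Hp; simpl in Hp.
    - pattern p; apply (well_founded_ind (w_wf Hx)). intros p0 IH0.
      constructor. intros [p1|p1] H1; simpl in H1; [apply IH0; auto| destruct H1].
    - apply IH; auto. }
  intros [p|p]; [|apply Hr].
  pattern p; apply (well_founded_ind (w_wf Hx)). intros p0 IH0.
  constructor. intros [p1|p1] H1; simpl in H1; [apply IH0; auto| destruct H1].
- destruct Hx as [_ [_ [_ [_ [f Hf]]]]]. destruct Hy as [_ [_ [_ [_ [g Hg]]]]].
  exists (fun s => match s with inl p => 2 * f p | inr q => (2 * g q).+1 end).
  intros [p|p] [q|q] E.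
  + f_equal; apply Hf. lia.
  + exfalso; lia.
  + exfalso; lia.
  + f_equal; apply Hg. lia.
Qed.

Lemma is_word_weq x y : weq x y -> is_word x -> is_word y.
Proof.
intros [f [g [H1 [H2 [H3 H4]]]]] Hx. split; [|split; [|split; [|split]]].
- intros p Hp. rewrite <- (H2 p) in Hp. apply H3 in Hp. exact (w_irr Hx Hp).
- intros p q r Hpq Hqr. rewrite <- (H2 p), <- (H2 q) in Hpq. rewrite <- (H2 q), <- (H2 r) in Hqr.
  rewrite <- (H2 p), <- (H2 r). apply H3. apply H3 in Hpq. apply H3 in Hqr. eapply (w_tr Hx); eauto.
- intros p q. destruct (w_tot Hx (g p) (g q)) as [H|[H|H]].
  + left. apply H3 in H. rewrite !H2 in H. auto.
  + right; left. rewrite <- (H2 p), H, H2. auto.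
  + right; right. apply H3 in H. rewrite !H2 in H. auto.
- intros q. rewrite <- (H2 q). generalize (g q). intros p.
  pattern p; apply (well_founded_ind (w_wf Hx)). intros p0 IH. constructor.
  intros q1 Hq1. rewrite <- (H2 q1) in Hq1 |- *. apply H3 in Hq1. apply IH; auto.
- destruct Hx as [_ [_ [_ [_ [h Hh]]]]]. exists (fun q => h (g q)).
  intros p q E. apply Hh in E. rewrite <- (H2 p), E, H2. auto.
Qed.

End Gen.

Arguments wempty {L}.
Section Gen2.
Variable L : Type.
Implicit Types x y : rword L.

Lemma sig_eq (T : Type) (P : T -> Prop) (s t : {a | P a}) : proj1_sig s = proj1_sig t -> s = t.
Proof. destruct s as [a h], t as [b h']; simpl; intros E; subst. f_equal; apply proof_irrelevance. Qed.

Lemma concat_congr x x' y y' : weq x x' -> weq y y' -> weq (concat x y) (concat x' y').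
Proof.
intros [f [g [H1 [H2 [H3 H4]]]]] [f' [g' [H1' [H2' [H3' H4']]]]].
exists (fun s => match s with inl a => inl (f a) | inr b => inr (f' b) end),
       (fun s => match s with inl a => inl (g a) | inr b => inr (g' b) end).
split; [|split; [|split]].
- intros [a|b]; rewrite ?H1 ?H1'; auto.
- intros [a|b]; rewrite ?H2 ?H2'; auto.
- intros [a|b] [a'|b']; simpl; auto; tauto.
- intros [a|b]; simpl; auto.
Qed.

Lemma concat_assoc x y (z : rword L) : weq (concat (concat x y) z) (concat x (concat y z)).
Proof.
exists (fun s => match s with inl (inl a) => inl a | inl (inr b) => inr (inl b) | inr c => inr (inr c) end),
       (fun s => match s with inl a => inl (inl a) | inr (inl b) => inl (inr b) | inr (inr c) => inr c end).
split; [|split; [|split]].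
- intros [[a|b]|c]; auto.
- intros [a|[b|c]]; auto.
- intros [[a|b]|c] [[a'|b']|c']; simpl; tauto.
- intros [[a|b]|c]; auto.
Qed.

Lemma concat_empty_r x (e : rword L) : empty e -> weq (concat x e) x.
Proof.
intros E. exists (fun s => match s with inl a => a | inr b => match E b with end end), (fun a => inl a).
split; [|split; [|split]].
- intros [a|b]; [auto|destruct (E b)].
- auto.
- intros [a|b] [a'|b']; simpl; try tauto; try destruct (E b); destruct (E b').
- intros [a|b]; [auto|destruct (E b)].
Qed.

Lemma concat_empty_l x (e : rword L) : empty e -> weq (concat e x) x.
Proof.
intros E. exists (fun s => match s with inr a => a | inl b => match E b with end end), (fun a => inr a).
split; [|split; [|split]].
- intros [b|a]; [destruct (E b)|auto].
- auto.
- intros [b|a] [b'|a']; simpl; try tauto; try destruct (E b); destruct (E b').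
- intros [b|a]; [destruct (E b)|auto].
Qed.

Lemma empty_weq x y : weq x y -> empty x -> empty y.
Proof. intros [f [g _]] E q. exact (E (g q)). Qed.

Lemma empty_wempty : empty (@wempty L).
Proof. intros []. Qed.

Lemma empty_concat x y : empty (concat x y) -> empty x /\ empty y.
Proof. intros E; split; intros a; [exact (E (inl a))|exact (E (inr a))]. Qed.

Lemma weq_empty x y : empty x -> empty y -> weq x y.
Proof.
intros Ex Ey. exists (fun a => match Ex a with end), (fun a => match Ey a with end).
split; [|split; [|split]]; intros a; try destruct (Ex a); destruct (Ey a).
Qed.

Definition sub x (P : pos x -> Prop) : rword L :=
  @RWord L {p : pos x | P p} (fun s t => plt (proj1_sig s) (proj1_sig t)) (fun s => lbl (proj1_sig s)).
Arguments sub x P : clear implicits.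

Lemma is_word_sub x P : is_word x -> is_word (@sub x P).
Proof.
intros Hx. split; [|split; [|split; [|split]]]; simpl.
- intros [p h]; apply (w_irr Hx).
- intros [p h] [q h'] [r h'']; apply (w_tr Hx).
- intros [p h] [q h']; simpl. destruct (w_tot Hx p q) as [H|[H|H]]; auto.
  right; left; apply sig_eq; auto.
- intros [p h]. revert h. pattern p; apply (well_founded_ind (w_wf Hx)).
  intros p0 IH h. constructor. intros [q h'] Hq. apply IH; auto.
- destruct Hx as [_ [_ [_ [_ [f Hf]]]]]. exists (fun s => f (proj1_sig s)).
  intros s t E. apply sig_eq, Hf, E.
Qed.

Lemma sub_allw x : is_word x -> weq (sub x (fun _ => True)) x.
Proof.
intros Hx. apply (@weq_ms _ (sub x (fun _ => True)) x (fun s => proj1_sig s)); auto.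
- apply is_word_sub; auto.
- intros q. exists (exist _ q I). auto.
Qed.

Lemma sub_ext x (P Q : pos x -> Prop) : is_word x -> (forall z, P z <-> Q z) -> weq (sub x P) (sub x Q).
Proof.
intros Hx H. apply (@weq_ms _ (sub x P) (sub x Q) (fun s => exist Q (proj1_sig s) (proj1 (H _) (proj2_sig s)))); auto.
- apply is_word_sub; auto.
- apply is_word_sub; auto.
- intros [q h]. exists (exist _ q (proj2 (H q) h)). apply sig_eq; auto.
Qed.

Lemma sub_split x (Q P1 P2 : pos x -> Prop) : is_word x ->
  (forall z, Q z <-> P1 z \/ P2 z) -> (forall z, P1 z -> P2 z -> False) ->
  (forall a b, P1 a -> P2 b -> plt a b) ->
  weq (concat (sub x P1) (sub x P2)) (sub x Q).
Proof.
intros Hx HQ Hd Ho.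
apply (@weq_ms _ (concat (sub x P1) (sub x P2)) (sub x Q) (fun s => match s with
   | inl a => exist Q (proj1_sig a) (proj2 (HQ _) (or_introl (proj2_sig a)))
   | inr b => exist Q (proj1_sig b) (proj2 (HQ _) (or_intror (proj2_sig b))) end)).
- apply is_word_concat; apply is_word_sub; auto.
- apply is_word_sub; auto.
- intros [[a ha]|[a ha]] [[b hb]|[b hb]]; simpl; auto; tauto.
- intros [q h]. destruct (proj1 (HQ q) h) as [h1|h2].
  + exists (inl (exist _ q h1)). apply sig_eq; auto.
  + exists (inr (exist _ q h2)). apply sig_eq; auto.
- intros [a|a]; auto.
Qed.

Lemma split_at x (P : pos x -> Prop) : is_word x -> (forall a b, P b -> plt a b -> P a) ->
  weq x (concat (sub x P) (sub x (fun z => ~ P z))).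
Proof.
intros Hx HP. apply weq_sym. eapply weq_trans; [|apply sub_allw; auto].
apply sub_split; auto.
- intros z; split; auto. intros _; apply classic.
- intros a b Ha Hb. destruct (w_tot Hx a b) as [H|[H|H]]; auto.
  + subst; tauto.
  + exfalso; eauto.
Qed.

Lemma cut_of y (p m : rword L) : is_word y -> is_word p -> is_word m -> weq y (concat p m) ->
  exists P : pos y -> Prop, (forall a b, P b -> plt a b -> P a) /\
    weq p (sub y P) /\ weq m (sub y (fun z => ~ P z)).
Proof.
intros Hy Hp Hm [f [g [H1 [H2 [H3 H4]]]]].
assert (H3' : forall a b, plt a b <-> plt (g a) (g b)).
{ intros a b. rewrite (H3 (g a) (g b)) !H2. tauto. }
exists (fun z => exists a, f z = inl a). split; [|split].
- intros a b [c Hc] Hab. apply H3 in Hab. rewrite Hc in Hab.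
  destruct (f a) as [a'|a'] eqn:E; [exists a'; auto|destruct Hab].
- apply (@weq_ms _ p (sub y (fun z => exists a, f z = inl a)) (fun a => exist (fun z => exists a, f z = inl a) (g (inl a)) (ex_intro _ a (H2 (inl a))))); auto.
  + apply is_word_sub; auto.
  + intros a b Hab; simpl. apply (H3' (inl a) (inl b)). exact Hab.
  + intros [z [a Ha]]. exists a. apply sig_eq; simpl. rewrite <- Ha, H1. auto.
  + intros a; simpl. rewrite <- (H4 (g (inl a))), H2. auto.
- assert (Hn : forall b, ~ exists a, f (g (inr b)) = inl a).
  { intros b [a Ha]. rewrite H2 in Ha. discriminate. }
  apply (@weq_ms _ m (sub y (fun z => ~ exists a, f z = inl a)) (fun b => exist (fun z => ~ exists a, f z = inl a) (g (inr b)) (Hn b))); auto.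
  + apply is_word_sub; auto.
  + intros a b Hab; simpl. apply (H3' (inr a) (inr b)). exact Hab.
  + intros [z Hz]. assert (HE : exists b, f z = inr b).
    { destruct (f z) as [a|b] eqn:E; [exfalso; apply Hz; eauto|eauto]. }
    destruct HE as [b E]. exists b. apply sig_eq; simpl. rewrite <- E, H1. auto.
  + intros a; simpl. rewrite <- (H4 (g (inr a))), H2. auto.
Qed.

Lemma emb_infl x (f : pos x -> pos x) : is_word x -> (forall a b, plt a b -> plt (f a) (f b)) ->
  forall a, ~ plt (f a) a.
Proof.
intros Hx Hf a. pattern a; apply (well_founded_ind (w_wf Hx)).
intros a0 IH H. apply (IH (f a0) H). apply Hf. exact H.
Qed.

Lemma no_absorb x (s : rword L) (f : pos (concat x s) -> pos x) : is_word x ->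
  (forall a b, plt a b -> plt (f a) (f b)) -> empty s.
Proof.
intros Hx Hf b.
assert (H := @emb_infl x (fun a => f (inl a)) Hx (fun a a' h => Hf (inl a) (inl a') h) (f (inr b))).
apply H. apply Hf. simpl. exact I.
Qed.

Lemma weq_absorb x (s : rword L) : is_word x -> weq x (concat x s) -> empty s.
Proof.
intros Hx Hw. apply weq_sym in Hw. destruct Hw as [f [g [H1 [H2 [H3 H4]]]]].
apply (@no_absorb x s f Hx). intros a b; apply H3.
Qed.

End Gen2.
Arguments sub {L} x P.

Definition pre {A : Type} (x : rword A) (c : pos x) := sub x (fun z => plt z c).
Definition sfx {A : Type} (x : rword A) (c : pos x) := sub x (fun z => ~ plt z c).
Definition sfxs {A : Type} (x : rword A) (c : pos x) := sub x (fun z => plt c z).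
Arguments pre {A} x c.
Arguments sfx {A} x c.
Arguments sfxs {A} x c.

Section Gen3.
Variable L : Type.
Implicit Types x y : rword L.

Lemma dc_lt x (P : pos x -> Prop) : is_word x -> (forall a b, P b -> plt a b -> P a) ->
  forall a b, P a -> ~ P b -> plt a b.
Proof.
intros Hx HP a b Ha Hb. destruct (w_tot Hx a b) as [H|[H|H]]; auto.
- subst; tauto.
- exfalso; eauto.
Qed.

Lemma eqd y (p m q n : rword L) : is_word y -> is_word p -> is_word m -> is_word q -> is_word n ->
  weq y (concat p m) -> weq y (concat q n) ->
  (exists k, is_word k /\ weq q (concat p k) /\ weq m (concat k n)) \/
  (exists k, is_word k /\ weq p (concat q k) /\ weq n (concat k m)).
Proof.
intros Hy Hp Hm Hq Hn E1 E2.
destruct (cut_of Hy Hp Hm E1) as [P [HP [Ep Em]]].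
destruct (cut_of Hy Hq Hn E2) as [Q [HQ [Eq En]]].
assert (Hc : (forall z, P z -> Q z) \/ (forall z, Q z -> P z)).
{ destruct (classic (forall z, P z -> Q z)) as [H|H]; [left; auto|right].
  apply not_all_ex_not in H. destruct H as [a Ha].
  intros b Hb. destruct (classic (P b)) as [|Hb']; auto. exfalso.
  apply Ha; intros Hpa. destruct (w_tot Hy a b) as [H|[H|H]].
  - exact (HQ a b Hb H).
  - subst; tauto.
  - exfalso; apply Hb'; exact (HP b a Hpa H). }
destruct Hc as [Hc|Hc].
- left. exists (sub y (fun z => Q z /\ ~ P z)). split; [apply is_word_sub; auto|split].
  + eapply weq_trans; [exact Eq|]. apply weq_sym. eapply weq_trans.
    * apply concat_congr; [exact Ep|apply weq_refl].
    * apply sub_split; auto.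
      -- intros z; split; [intros Hz; destruct (classic (P z)); auto|intros [H|[H _]]; auto].
      -- intros z H [_ H']; tauto.
      -- intros a b Ha [_ Hb]. apply (dc_lt Hy HP); auto.
  + eapply weq_trans; [exact Em|]. apply weq_sym. eapply weq_trans.
    * apply concat_congr; [apply weq_refl|exact En].
    * apply sub_split; auto.
      -- intros z; split.
         ++ intros Hz. destruct (classic (Q z)); [left; split; auto|right; auto].
         ++ intros [[_ H]|H] Hpz; [tauto|apply H, Hc, Hpz].
      -- intros z [H1 _] H'; tauto.
      -- intros a b [Ha _] Hb. apply (dc_lt Hy HQ); auto.
- right. exists (sub y (fun z => P z /\ ~ Q z)). split; [apply is_word_sub; auto|split].
  + eapply weq_trans; [exact Ep|]. apply weq_sym. eapply weq_trans.
    * apply concat_congr; [exact Eq|apply weq_refl].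
    * apply sub_split; auto.
      -- intros z; split; [intros Hz; destruct (classic (Q z)); auto|intros [H|[H _]]; auto].
      -- intros z H [_ H']; tauto.
      -- intros a b Ha [_ Hb]. apply (dc_lt Hy HQ); auto.
  + eapply weq_trans; [exact En|]. apply weq_sym. eapply weq_trans.
    * apply concat_congr; [apply weq_refl|exact Em].
    * apply sub_split; auto.
      -- intros z; split.
         ++ intros Hz. destruct (classic (P z)); [left; split; auto|right; auto].
         ++ intros [[_ H]|H] Hpz; [tauto|apply H, Hc, Hpz].
      -- intros z [H1 _] H'; tauto.
      -- intros a b [Ha _] Hb. apply (dc_lt Hy HP); auto.
Qed.

Lemma is_word_wpow (u : rword L) (b : cordinal) : is_word u -> is_word b -> is_word (wpow u b).
Proof.
intros Hu Hb. split; [|split; [|split; [|split]]]; simpl.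
- intros [c p] [H|[_ H]]; [exact (w_irr Hb H)|exact (w_irr Hu H)].
- intros [c1 p1] [c2 p2] [c3 p3]; simpl.
  intros [H|[E H]] [H'|[E' H']]; subst.
  + left; eapply (w_tr Hb); eauto.
  + left; auto.
  + left; auto.
  + right; split; auto. eapply (w_tr Hu); eauto.
- intros [c1 p1] [c2 p2]; simpl. destruct (w_tot Hb c1 c2) as [H|[H|H]]; auto.
  subst. destruct (w_tot Hu p1 p2) as [H|[H|H]]; subst; auto.
- intros [c p]. revert p. pattern c; apply (well_founded_ind (w_wf Hb)).
  intros c0 IH p. pattern p; apply (well_founded_ind (w_wf Hu)).
  intros p0 IHp. constructor. intros [c1 p1] [H|[E H]]; simpl in *.
  + apply IH; auto.
  + subst. apply IHp; auto.
- destruct Hu as [_ [_ [_ [_ [f Hf]]]]]. destruct Hb as [_ [_ [_ [_ [g Hg]]]]].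
  exists (fun s => Cantor.to_nat (g s.1, f s.2)). intros [c1 p1] [c2 p2] E.
  apply (f_equal Cantor.of_nat) in E. rewrite !Cantor.cancel_of_to in E. injection E; intros E1 E2.
  apply Hf in E1. apply Hg in E2. subst; auto.
Qed.

Lemma wpow_congr_l (u u' : rword L) (b : cordinal) : weq u u' -> weq (wpow u b) (wpow u' b).
Proof.
intros [f [g [H1 [H2 [H3 H4]]]]].
exists (fun s => (s.1, f s.2)), (fun s => (s.1, g s.2)). split; [|split; [|split]].
- intros [c p]; simpl; rewrite H1; auto.
- intros [c p]; simpl; rewrite H2; auto.
- intros [c p] [c' p']; simpl. rewrite (H3 p p'). tauto.
- intros [c p]; simpl; auto.
Qed.

Lemma wpow_congr_r (u : rword L) (b b' : cordinal) : weq b b' -> weq (wpow u b) (wpow u b').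
Proof.
intros [f [g [H1 [H2 [H3 H4]]]]].
exists (fun s => (f s.1, s.2)), (fun s => (g s.1, s.2)). split; [|split; [|split]].
- intros [c p]; simpl; rewrite H1; auto.
- intros [c p]; simpl; rewrite H2; auto.
- intros [c p] [c' p']; simpl. rewrite (H3 c c'). split; intros [H|[E H]]; auto.
  + subst; auto.
  + right; split; auto. rewrite <- (H1 c), E, H1. auto.
- intros [c p]; simpl; auto.
Qed.

Lemma wpow_concat (u : rword L) (b c : cordinal) :
  weq (wpow u (concat b c)) (concat (wpow u b) (wpow u c)).
Proof.
exists (fun s => match s with (inl e, p) => inl (e, p) | (inr e, p) => inr (e, p) end),
       (fun s => match s with inl (e, p) => (inl e, p) | inr (e, p) => (inr e, p) end).
split; [|split; [|split]].
- intros [[e|e] p]; auto.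
- intros [[e p]|[e p]]; auto.
- intros [[e|e] p] [[e'|e'] p']; simpl.
  + split; intros [H|[E H]]; auto; right; split; auto; [injection E; auto|subst; auto].
  + tauto.
  + split; [intros [H|[E H]]; [exact H|discriminate]|intros []].
  + split; intros [H|[E H]]; auto; right; split; auto; [injection E; auto|subst; auto].
- intros [[e|e] p]; auto.
Qed.

Lemma wpow_single (u : rword L) (b : cordinal) (b0 : pos b) : (forall e : pos b, e = b0) ->
  is_word b -> weq (wpow u b) u.
Proof.
intros Hb Hw. exists (fun s => s.2), (fun p => (b0, p)). split; [|split; [|split]].
- intros [e p]; simpl. rewrite (Hb e); auto.
- auto.
- intros [e p] [e' p']; simpl. rewrite (Hb e) (Hb e'). split; [intros [H|[_ H]]; auto|auto].
  exfalso; exact (w_irr Hw H).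
- auto.
Qed.

Lemma wpow_empty (u : rword L) (b : cordinal) : empty b -> empty (wpow u b).
Proof. intros E [e p]; exact (E e). Qed.

Lemma wpow_empty_u (u : rword L) (b : cordinal) : empty u -> empty (wpow u b).
Proof. intros E [e p]; exact (E p). Qed.

Lemma split_pre x (c : pos x) : is_word x -> weq x (concat (pre x c) (sfx x c)).
Proof.
intros Hx. apply split_at; auto. intros a b H1 H2; eapply (w_tr Hx); eauto.
Qed.

Lemma sfx_letter x (c : pos x) : is_word x -> weq (sfx x c) (concat (letter (lbl c)) (sfxs x c)).
Proof.
intros Hx. apply weq_sym.
assert (Hc : ~ plt c c) by apply (w_irr Hx).
assert (Hs : forall s : pos (sfxs x c), ~ plt (proj1_sig s) c).
{ intros [z h] H; simpl in H. exact (w_irr Hx (w_tr Hx H h)). }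
apply (@weq_ms _ (concat (letter (lbl c)) (sfxs x c)) (sfx x c)
  (fun s => match s with inl _ => exist _ c Hc | inr s => exist _ (proj1_sig s) (Hs s) end)).
- apply is_word_concat; [apply is_word_letter|apply is_word_sub; auto].
- apply is_word_sub; auto.
- intros [[]|[a ha]] [[]|[b hb]]; simpl; try tauto; auto.
- intros [z h]. destruct (w_tot Hx c z) as [H|[H|H]].
  + exists (inr (exist _ z H)). apply sig_eq; auto.
  + subst. exists (inl tt). apply sig_eq; auto.
  + exfalso; exact (h H).
- intros [[]|[a ha]]; auto.
Qed.

Lemma decomp_pos w y (z : rword L) : is_word w -> is_word y -> is_word z ->
  weq w (concat y z) -> inhabited (pos z) ->
  exists c : pos w, weq y (pre w c) /\ weq z (sfx w c).
Proof.
intros Hw Hy Hz E [z0].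
destruct (cut_of Hw Hy Hz E) as [P [HP [Ey Ez]]].
assert (Hne : exists c, ~ P c).
{ destruct Ez as [f [g _]]. exists (proj1_sig (f z0)). exact (proj2_sig (f z0)). }
destruct (w_min Hw Hne) as [c [Hc Hmin]].
exists c. split.
- eapply weq_trans; [exact Ey|]. apply sub_ext; auto. intros a; split.
  + intros Ha. apply (dc_lt Hw HP); auto.
  + intros Ha. destruct (classic (P a)); auto. exfalso; exact (Hmin a H Ha).
- eapply weq_trans; [exact Ez|]. apply sub_ext; auto. intros a; split.
  + intros Ha H. exact (Hmin a Ha H).
  + intros Ha Pa. apply Ha. apply (dc_lt Hw HP); auto.
Qed.

Lemma sfx_concat_r x y (q : pos y) : is_word x -> is_word y ->
  weq (sfx (concat x y) (inr q)) (sfx y q).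
Proof.
intros Hx Hy. apply weq_sym.
apply (@weq_ms _ (sfx y q) (sfx (concat x y) (inr q))
  (fun s => exist (fun z : pos (concat x y) => ~ plt z (inr q)) (inr (proj1_sig s)) (proj2_sig s))).
- apply is_word_sub; auto.
- apply is_word_sub, is_word_concat; auto.
- intros [a ha] [b hb]; simpl; auto.
- intros [[a|a] h]; simpl in h.
  + exfalso; apply h; exact I.
  + exists (exist _ a h). apply sig_eq; auto.
- auto.
Qed.

Lemma sfx_concat_l x y (a : pos x) : is_word x -> is_word y ->
  weq (sfx (concat x y) (inl a)) (concat (sfx x a) y).
Proof.
intros Hx Hy. apply weq_sym.
assert (Hr : forall b : pos y, ~ plt (r := concat x y) (inr b) (inl a)) by (intros b H; exact H).
apply (@weq_ms _ (concat (sfx x a) y) (sfx (concat x y) (inl a))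
  (fun s => match s with inl s => exist (fun z : pos (concat x y) => ~ plt z (inl a)) (inl (proj1_sig s)) (proj2_sig s)
                    | inr b => exist (fun z : pos (concat x y) => ~ plt z (inl a)) (inr b) (Hr b) end)).
- apply is_word_concat; auto. apply is_word_sub; auto.
- apply is_word_sub, is_word_concat; auto.
- intros [[c hc]|c] [[d hd]|d]; simpl; auto.
- intros [[c|c] h]; simpl in h.
  + exists (inl (exist _ c h)). apply sig_eq; auto.
  + exists (inr c). apply sig_eq; auto.
- intros [[c hc]|c]; auto.
Qed.

Lemma pre_concat_l x y (a : pos x) : is_word x -> is_word y ->
  weq (pre (concat x y) (inl a)) (pre x a).
Proof.
intros Hx Hy. apply weq_sym.
apply (@weq_ms _ (pre x a) (pre (concat x y) (inl a))
  (fun s => exist (fun z : pos (concat x y) => plt z (inl a)) (inl (proj1_sig s)) (proj2_sig s))).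
- apply is_word_sub; auto.
- apply is_word_sub, is_word_concat; auto.
- intros [c hc] [d hd]; simpl; auto.
- intros [[c|c] h]; simpl in h.
  + exists (exist _ c h). apply sig_eq; auto.
  + destruct h.
- auto.
Qed.

Lemma pre_concat_r x y (q : pos y) : is_word x -> is_word y ->
  weq (pre (concat x y) (inr q)) (concat x (pre y q)).
Proof.
intros Hx Hy. apply weq_sym.
assert (Hl : forall b : pos x, plt (r := concat x y) (inl b) (inr q)) by (intros; exact I).
apply (@weq_ms _ (concat x (pre y q)) (pre (concat x y) (inr q))
  (fun s => match s with inr s => exist (fun z : pos (concat x y) => plt z (inr q)) (inr (proj1_sig s)) (proj2_sig s)
                    | inl b => exist (fun z : pos (concat x y) => plt z (inr q)) (inl b) (Hl b) end)).
- apply is_word_concat; auto. apply is_word_sub; auto.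
- apply is_word_sub, is_word_concat; auto.
- intros [c|[c hc]] [d|[d hd]]; simpl; auto.
- intros [[c|c] h]; simpl in h.
  + exists (inl c). apply sig_eq; auto.
  + exists (inr (exist _ c h)). apply sig_eq; auto.
- intros [c|[c hc]]; auto.
Qed.

Lemma sfx_wpow (u : rword L) (b : cordinal) (e : pos b) (p : pos u) : is_word u -> is_word b ->
  weq (sfx (wpow u b) (e, p)) (concat (sfx u p) (wpow u (sfxs b e))).
Proof.
intros Hu Hb. apply weq_sym.
assert (H1 : forall s : pos (sfx u p), ~ plt (r := wpow u b) (e, proj1_sig s) (e, p)).
{ intros [p' h] [H|[_ H]]; simpl in *; [exact (w_irr Hb H)|exact (h H)]. }
assert (H2 : forall s : pos (wpow u (sfxs b e)), ~ plt (r := wpow u b) (proj1_sig s.1, s.2) (e, p)).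
{ intros [[e' h] p'] [H|[E H]]; simpl in *.
  - exact (w_irr Hb (w_tr Hb H h)).
  - subst; exact (w_irr Hb h). }
apply (@weq_ms _ (concat (sfx u p) (wpow u (sfxs b e))) (sfx (wpow u b) (e, p))
  (fun s => match s with inl s => exist (fun z : pos (wpow u b) => ~ plt z (e, p)) (e, proj1_sig s) (H1 s)
                    | inr s => exist (fun z : pos (wpow u b) => ~ plt z (e, p)) (proj1_sig s.1, s.2) (H2 s) end)).
- apply is_word_concat; [apply is_word_sub; auto|apply is_word_wpow; auto; apply is_word_sub; auto].
- apply is_word_sub, is_word_wpow; auto.
- intros [[c hc]|[[c hc] c']] [[d hd]|[[d hd] d']]; simpl.
  + intros HH; right; split; auto.
  + intros _; left; exact hd.
  + intros [].
  + intros [HH|[EE HH]]; [left; exact HH|right; split; [exact (f_equal (@proj1_sig _ _) EE)|exact HH]].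
- intros [[e' p'] h]. simpl in h. destruct (w_tot Hb e e') as [H|[H|H]].
  + exists (inr (exist _ e' H, p')). apply sig_eq; auto.
  + subst. assert (h' : ~ plt p' p) by (intros H; apply h; right; auto).
    exists (inl (exist _ p' h')). apply sig_eq; auto.
  + exfalso; apply h; left; auto.
- intros [[c hc]|[[c hc] c']]; auto.
Qed.

Lemma pre_wpow (u : rword L) (b : cordinal) (e : pos b) (p : pos u) : is_word u -> is_word b ->
  weq (pre (wpow u b) (e, p)) (concat (wpow u (pre b e)) (pre u p)).
Proof.
intros Hu Hb. apply weq_sym.
assert (H1 : forall s : pos (pre u p), plt (r := wpow u b) (e, proj1_sig s) (e, p)).
{ intros [p' h]; simpl; right; auto. }
assert (H2 : forall s : pos (wpow u (pre b e)), plt (r := wpow u b) (proj1_sig s.1, s.2) (e, p)).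
{ intros [[e' h] p']; simpl; left; auto. }
apply (@weq_ms _ (concat (wpow u (pre b e)) (pre u p)) (pre (wpow u b) (e, p))
  (fun s => match s with inr s => exist (fun z : pos (wpow u b) => plt z (e, p)) (e, proj1_sig s) (H1 s)
                    | inl s => exist (fun z : pos (wpow u b) => plt z (e, p)) (proj1_sig s.1, s.2) (H2 s) end)).
- apply is_word_concat; [apply is_word_wpow; auto; apply is_word_sub; auto|apply is_word_sub; auto].
- apply is_word_sub, is_word_wpow; auto.
- intros [[[c hc] c']|[c hc]] [[[d hd] d']|[d hd]]; simpl.
  + intros [HH|[EE HH]]; [left; exact HH|right; split; [exact (f_equal (@proj1_sig _ _) EE)|exact HH]].
  + intros _; left; exact hc.
  + intros [].
  + intros HH; right; split; auto.
- intros [[e' p'] h]. simpl in h. destruct h as [h|[E h]].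
  + exists (inl (exist _ e' h, p')). apply sig_eq; auto.
  + subst. exists (inr (exist _ p' h)). apply sig_eq; auto.
- intros [[[c hc] c']|[c hc]]; auto.
Qed.

End Gen3.

Section Cmp.
Variable L : Type.
Variables x y : rword L.
Hypothesis Hx : is_word x.
Hypothesis Hy : is_word y.

Definition Fstep (p : pos x) (rec : forall p', plt p' p -> option (pos y)) : option (pos y) :=
  let S := fun q : pos y => forall p' (h : plt p' p), exists q', rec p' h = Some q' /\ plt q' q in
  match excluded_middle_informative (exists q, S q /\ forall q0, S q0 -> ~ plt q0 q) with
  | left H => Some (proj1_sig (constructive_indefinite_description _ H))
  | right _ => None
  end.

Definition F : pos x -> option (pos y) := Fix (w_wf Hx) (fun _ => option (pos y)) Fstep.

Lemma F_eq p : F p = @Fstep p (fun p' _ => F p').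
Proof.
unfold F. rewrite Fix_eq; auto.
intros p0 f g Hfg. assert (E : f = g).
{ apply functional_extensionality_dep; intros a. apply functional_extensionality_dep; intros h. auto. }
rewrite E; auto.
Qed.

Definition Sp p q := forall p', plt p' p -> exists q', F p' = Some q' /\ plt q' q.

Lemma F_spec p : (exists q, F p = Some q /\ Sp p q /\ forall q0, Sp p q0 -> ~ plt q0 q) \/
                 (F p = None /\ forall q, ~ Sp p q).
Proof.
rewrite F_eq. unfold Fstep.
destruct (excluded_middle_informative _) as [H|H].
- left. destruct (constructive_indefinite_description _ H) as [q [Hq1 Hq2]]; simpl.
  exists q; split; auto.
- right; split; auto. intros q Hq. apply H.
  destruct (w_min Hy (P := Sp p) (ex_intro _ q Hq)) as [m [Hm1 Hm2]].
  exists m; split; auto.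
Qed.

Lemma F1 p q : F p = Some q -> forall p', plt p' p -> exists q', F p' = Some q' /\ plt q' q.
Proof.
intros E. destruct (F_spec p) as [[q1 [E1 [H1 _]]]|[E1 _]]; [|congruence].
rewrite E in E1; injection E1; intros; subst; auto.
Qed.

Lemma F2 p q : F p = Some q -> forall q0, plt q0 q -> exists p0, plt p0 p /\ F p0 = Some q0.
Proof.
revert q. pattern p; apply (well_founded_ind (w_wf Hx)). intros p1 IH q E q0 Hq0.
destruct (F_spec p1) as [[q1 [E1 [H1 H2]]]|[E1 _]]; [|congruence].
rewrite E in E1; injection E1; intros; subst q1.
assert (Hn : ~ Sp p1 q0) by (intros HS; exact (H2 q0 HS Hq0)).
unfold Sp in Hn. apply not_all_ex_not in Hn. destruct Hn as [p' Hp'].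
apply imply_to_and in Hp'. destruct Hp' as [Hlt Hn].
destruct (F1 E Hlt) as [q' [E' Hq']].
destruct (w_tot Hy q' q0) as [H|[H|H]].
- exfalso; apply Hn; eauto.
- subst; eauto.
- destruct (IH p' Hlt q' E' q0 H) as [p0 [Hp0 E0]]. exists p0; split; auto.
  eapply (w_tr Hx); eauto.
Qed.

Lemma F_inj p p' q : F p = Some q -> F p' = Some q -> p = p'.
Proof.
intros E E'. destruct (w_tot Hx p p') as [H|[H|H]]; auto.
- destruct (F1 E' H) as [q1 [E1 H1]]. rewrite E in E1; injection E1; intros; subst.
  exfalso; exact (w_irr Hy H1).
- destruct (F1 E H) as [q1 [E1 H1]]. rewrite E' in E1; injection E1; intros; subst.
  exfalso; exact (w_irr Hy H1).
Qed.

Lemma F5 p : F p = None -> (forall p', plt p' p -> F p' <> None) ->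
  forall q, exists p0, plt p0 p /\ F p0 = Some q.
Proof.
intros E Hd q. destruct (F_spec p) as [[q1 [E1 _]]|[_ Hn]]; [congruence|].
specialize (Hn q). unfold Sp in Hn. apply not_all_ex_not in Hn. destruct Hn as [p' Hp'].
apply imply_to_and in Hp'. destruct Hp' as [Hlt Hn].
destruct (F p') as [q'|] eqn:E'; [|exfalso; exact (Hd p' Hlt E')].
destruct (w_tot Hy q' q) as [H|[H|H]].
- exfalso; apply Hn; eauto.
- subst; eauto.
- destruct (F2 E' H) as [p0 [Hp0 E0]]. exists p0; split; auto. eapply (w_tr Hx); eauto.
Qed.

Definition G p := F p = None \/ exists q, F p = Some q /\ lbl q <> lbl p.

Lemma cmp_gen :
  wprefix x y \/ wprefix y x \/
  exists (pw r r' : rword L) (a b : L), is_word pw /\ is_word r /\ is_word r' /\ a <> b /\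
    weq x (concat pw (concat (letter a) r)) /\ weq y (concat pw (concat (letter b) r')).
Proof.
destruct (classic (exists p, G p)) as [HG|HG].
- destruct (w_min Hx HG) as [ps [Gs Hmin]].
  assert (Hbelow : forall p, plt p ps -> exists q, F p = Some q /\ lbl q = lbl p).
  { intros p Hp. destruct (F p) as [q|] eqn:E.
    - exists q; split; auto. destruct (classic (lbl q = lbl p)) as [|Hn]; auto.
      exfalso; apply (Hmin p); auto. right; eauto.
    - exfalso; apply (Hmin p); auto. left; auto. }
  destruct Gs as [Es|[qs [Es Hl]]].
  +
    right; left.
    assert (Hk : forall q : pos y, exists p, plt p ps /\ F p = Some q).
    { apply F5; auto. intros p' Hp' E'. destruct (Hbelow p' Hp') as [q [E _]]. congruence. }
    pose k := fun q => proj1_sig (constructive_indefinite_description _ (Hk q)).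
    assert (Hk1 : forall q, plt (k q) ps /\ F (k q) = Some q).
    { intros q; unfold k; destruct (constructive_indefinite_description _ (Hk q)); auto. }
    exists (sfx x ps). split; [apply is_word_sub; auto|].
    apply weq_sym.
    apply (@weq_ms _ (concat y (sfx x ps)) x
      (fun s => match s with inl q => k q | inr s => proj1_sig s end)).
    * apply is_word_concat; auto; apply is_word_sub; auto.
    * auto.
    * intros [q|[s hs]] [q'|[s' hs']]; simpl; auto.
      -- intros Hqq. destruct (Hk1 q) as [_ E]. destruct (Hk1 q') as [_ E'].
         destruct (w_tot Hx (k q) (k q')) as [H|[H|H]]; auto.
         ++ rewrite H in E. rewrite E in E'; injection E'; intros; subst.
            exfalso; exact (w_irr Hy Hqq).
         ++ destruct (F1 E H) as [q1 [E1 H1]]. rewrite E' in E1; injection E1; intros; subst.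
            exfalso; exact (w_irr Hy (w_tr Hy H1 Hqq)).
      -- intros _. destruct (Hk1 q) as [H _]. apply (dc_lt (P := fun z => plt z ps)) ; auto.
         intros a b H1 H2; eapply (w_tr Hx); eauto.
      -- intros [].
    * intros p. destruct (classic (plt p ps)) as [H|H].
      -- destruct (Hbelow p H) as [q [E _]]. exists (inl q).
         destruct (Hk1 q) as [_ E']. eapply F_inj; eauto.
      -- exists (inr (exist _ p H)); auto.
    * intros [q|[s hs]]; simpl; auto.
      destruct (Hk1 q) as [H E]. destruct (Hbelow _ H) as [q' [E' Hl]].
      rewrite E in E'; injection E'; intros; subst; auto.
  + (* mismatch at ps *)
    right; right.
    assert (Hk : forall s : pos (pre x ps), exists q, F (proj1_sig s) = Some q).
    { intros [p h]. destruct (Hbelow p h) as [q [E _]]; eauto. }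
    pose k := fun s => proj1_sig (constructive_indefinite_description _ (Hk s)).
    assert (Hk1 : forall s, F (proj1_sig s) = Some (k s)).
    { intros s; unfold k; destruct (constructive_indefinite_description _ (Hk s)); auto. }
    assert (Hk2 : forall s, plt (k s) qs).
    { intros [p h]. destruct (F1 Es h) as [q1 [E1 H1]]. rewrite (Hk1 (exist _ p h)) in E1.
      injection E1; intros; subst; auto. }
    exists (pre x ps), (sfxs x ps), (sfxs y qs), (lbl ps), (lbl qs).
    split; [apply is_word_sub; auto|split; [apply is_word_sub; auto|split; [apply is_word_sub; auto|split]]].
    { intros E; apply Hl; auto. }
    split.
    * eapply weq_trans; [apply split_pre with (c := ps); auto|].
      apply concat_congr; [apply weq_refl|apply sfx_letter; auto].
    * eapply weq_trans; [apply split_pre with (c := qs); auto|].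
      apply concat_congr; [|apply sfx_letter; auto].
      apply weq_sym.
      apply (@weq_ms _ (pre x ps) (pre y qs) (fun s => exist (fun z => plt z qs) (k s) (Hk2 s))).
      -- apply is_word_sub; auto.
      -- apply is_word_sub; auto.
      -- intros [p h] [p' h'] Hpp; simpl in *.
         destruct (F1 (Hk1 (exist _ p' h')) Hpp) as [q1 [E1 H1]].
         rewrite (Hk1 (exist _ p h)) in E1; injection E1; intros; subst; auto.
      -- intros [q h]. destruct (F2 Es h) as [p0 [Hp0 E0]]. exists (exist _ p0 Hp0).
         apply sig_eq; simpl. rewrite (Hk1 (exist _ p0 Hp0)) in E0; injection E0; auto.
      -- intros [p h]; simpl. destruct (Hbelow p h) as [q [E Hlq]].
         rewrite (Hk1 (exist _ p h)) in E; injection E; intros; subst; auto.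
-
  left.
  assert (Hk : forall p, exists q, F p = Some q).
  { intros p. destruct (F p) as [q|] eqn:E; eauto. exfalso; apply HG; exists p; left; auto. }
  pose k := fun p => proj1_sig (constructive_indefinite_description _ (Hk p)).
  assert (Hk1 : forall p, F p = Some (k p)).
  { intros p; unfold k; destruct (constructive_indefinite_description _ (Hk p)); auto. }
  exists (sub y (fun q => ~ exists p, F p = Some q)). split; [apply is_word_sub; auto|].
  apply weq_sym.
  apply (@weq_ms _ (concat x (sub y (fun q => ~ exists p, F p = Some q))) y
      (fun s => match s with inl p => k p | inr s => proj1_sig s end)).
  + apply is_word_concat; auto; apply is_word_sub; auto.
  + auto.
  + intros [p|[s hs]] [p'|[s' hs']]; simpl; auto.
    * intros Hpp. destruct (F1 (Hk1 p') Hpp) as [q1 [E1 H1]]. rewrite Hk1 in E1.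
      injection E1; intros; subst; auto.
    * intros _. destruct (w_tot Hy (k p) s') as [H|[H|H]]; auto.
      -- exfalso; apply hs'; exists p; subst; auto.
      -- exfalso; apply hs'. destruct (F2 (Hk1 p) H) as [p0 [_ E0]]; eauto.
    * intros [].
  + intros q. destruct (classic (exists p, F p = Some q)) as [[p E]|H].
    * exists (inl p). simpl. rewrite Hk1 in E; injection E; auto.
    * exists (inr (exist _ q H)); auto.
  + intros [p|[s hs]]; simpl; auto.
    destruct (classic (lbl (k p) = lbl p)) as [|Hn]; auto.
    exfalso; apply HG; exists p; right; exists (k p); split; auto.
Qed.

End Cmp.

Section Gen5.
Variable L : Type.
Implicit Types x y : rword L.

Lemma weq_letter_lbl (a b : L) : weq (letter a) (letter b) -> a = b.
Proof. intros [f [g [_ [_ [_ H]]]]]. specialize (H tt). simpl in H. auto. Qed.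

Lemma letter_split (a : L) p k : is_word p -> is_word k -> weq (letter a) (concat p k) ->
  (empty p /\ weq k (letter a)) \/ (empty k /\ weq p (letter a)).
Proof.
intros Hp Hk E. assert (E' := E). destruct E as [f [g [H1 [H2 [H3 H4]]]]].
assert (Hall : forall s, s = f tt) by (intros s; rewrite <- (H2 s); destruct (g s); auto).
destruct (f tt) as [a0|a0] eqn:Ef.
- right. split.
  + intros b. specialize (Hall (inr b)). discriminate.
  + apply weq_sym. apply (@weq_ms _ (letter a) p (fun _ => a0)); auto.
    * apply is_word_letter.
    * intros [] [] [].
    * intros a'. exists tt. specialize (Hall (inl a')). injection Hall; auto.
    * intros []. specialize (H4 tt). rewrite Ef in H4. exact H4.
- left. split.
  + intros b. specialize (Hall (inl b)). discriminate.
  + apply weq_sym. apply (@weq_ms _ (letter a) k (fun _ => a0)); auto.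
    * apply is_word_letter.
    * intros [] [] [].
    * intros a'. exists tt. specialize (Hall (inr a')). injection Hall; auto.
    * intros []. specialize (H4 tt). rewrite Ef in H4. exact H4.
Qed.

Lemma lcancel p x y : is_word p -> is_word x -> is_word y ->
  weq (concat p x) (concat p y) -> weq x y.
Proof.
intros Hp Hx Hy E.
destruct (@eqd _ (concat p x) p x p y (is_word_concat Hp Hx) Hp Hx Hp Hy (weq_refl _) E)
  as [[k [Hk [E1 E2]]]|[k [Hk [E1 E2]]]].
- assert (Ek := weq_absorb Hp E1). eapply weq_trans; [exact E2|]. apply concat_empty_l; auto.
- assert (Ek := weq_absorb Hp E1). apply weq_sym. eapply weq_trans; [exact E2|]. apply concat_empty_l; auto.
Qed.

Lemma first_letter (a b : L) r s : is_word r -> is_word s ->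
  weq (concat (letter a) r) (concat (letter b) s) -> a = b /\ weq r s.
Proof.
intros Hr Hs E.
assert (Ha := is_word_letter a). assert (Hb := is_word_letter b).
destruct (@eqd _ (concat (letter a) r) (letter a) r (letter b) s (is_word_concat Ha Hr) Ha Hr Hb Hs (weq_refl _) E)
  as [[k [Hk [E1 E2]]]|[k [Hk [E1 E2]]]].
- destruct (letter_split Ha Hk E1) as [[Ea _]|[Ek Eb]]; [exfalso; exact (Ea tt)|].
  split.
  + apply weq_letter_lbl; exact Eb.
  + eapply weq_trans; [exact E2|]. apply concat_empty_l; auto.
- destruct (letter_split Hb Hk E1) as [[Ea _]|[Ek Eb]]; [exfalso; exact (Ea tt)|].
  split.
  + symmetry; apply weq_letter_lbl; exact Eb.
  + apply weq_sym. eapply weq_trans; [exact E2|]. apply concat_empty_l; auto.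
Qed.

Lemma head_letter (c : L) t0 k t : is_word t0 -> is_word k -> is_word t ->
  weq (concat (letter c) t0) (concat k t) -> inhabited (pos k) ->
  exists k1, is_word k1 /\ weq k (concat (letter c) k1) /\ weq t0 (concat k1 t).
Proof.
intros Ht0 Hk Ht E [k0].
assert (Hc := is_word_letter c).
destruct (@eqd _ (concat (letter c) t0) (letter c) t0 k t (is_word_concat Hc Ht0) Hc Ht0 Hk Ht (weq_refl _) E)
  as [[k1 [Hk1 [E1 E2]]]|[k1 [Hk1 [E1 E2]]]].
- exists k1; auto.
- destruct (letter_split Hk Hk1 E1) as [[Ek _]|[Ek1 Ekc]]; [exfalso; exact (Ek k0)|].
  exists wempty. split; [apply is_word_empty, empty_wempty|split].
  + eapply weq_trans; [exact Ekc|]. apply weq_sym, concat_empty_r, empty_wempty.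
  + assert (Ett0 : weq t t0) by (eapply weq_trans; [exact E2|apply concat_empty_l; auto]).
    eapply weq_trans; [apply weq_sym; exact Ett0|]. apply weq_sym, concat_empty_l, empty_wempty.
Qed.

Lemma leqd_half p q k (a b : L) r s : is_word p -> is_word q -> is_word k -> is_word r -> is_word s ->
  weq q (concat p k) -> weq (concat (letter a) r) (concat k (concat (letter b) s)) ->
  (weq p q /\ a = b /\ weq r s) \/
  (exists k1, is_word k1 /\ weq q (concat p (concat (letter a) k1)) /\ weq r (concat k1 (concat (letter b) s))).
Proof.
intros Hp Hq Hk Hr Hs E1 E2.
destruct (classic (inhabited (pos k))) as [Hne|He].
- right. destruct (head_letter Hr Hk (is_word_concat (is_word_letter b) Hs) E2 Hne) as [k1 [Hk1 [F1 F2]]].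
  exists k1; split; auto. split; auto.
  eapply weq_trans; [exact E1|]. apply concat_congr; auto. apply weq_refl.
- assert (Ek : empty k) by (intros z; apply He; constructor; auto).
  left. split; [|apply first_letter; auto].
  + apply weq_sym. eapply weq_trans; [exact E1|]. apply concat_empty_r; auto.
  + eapply weq_trans; [exact E2|]. apply concat_empty_l; auto.
Qed.

Lemma leqd Y p q (a b : L) r s : is_word Y -> is_word p -> is_word q -> is_word r -> is_word s ->
  weq Y (concat p (concat (letter a) r)) -> weq Y (concat q (concat (letter b) s)) ->
  (weq p q /\ a = b /\ weq r s) \/
  (exists k1, is_word k1 /\ weq q (concat p (concat (letter a) k1)) /\ weq r (concat k1 (concat (letter b) s))) \/
  (exists k1, is_word k1 /\ weq p (concat q (concat (letter b) k1)) /\ weq s (concat k1 (concat (letter a) r))).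
Proof.
intros HY Hp Hq Hr Hs E1 E2.
assert (Har := is_word_concat (is_word_letter a) Hr).
assert (Hbs := is_word_concat (is_word_letter b) Hs).
destruct (eqd HY Hp Har Hq Hbs E1 E2) as [[k [Hk [F1 F2]]]|[k [Hk [F1 F2]]]].
- destruct (leqd_half Hp Hq Hk Hr Hs F1 F2) as [H|H]; auto.
- destruct (leqd_half Hq Hp Hk Hs Hr F1 F2) as [[G1 [G2 G3]]|H]; auto.
  left. split; [apply weq_sym; auto|split; [auto|apply weq_sym; auto]].
Qed.

Lemma leqd_same Y p q (a b : L) r s : is_word Y -> is_word p -> is_word q -> is_word r -> is_word s ->
  weq Y (concat p (concat (letter a) r)) -> weq Y (concat q (concat (letter b) s)) -> weq p q ->
  a = b /\ weq r s.
Proof.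
intros HY Hp Hq Hr Hs E1 E2 Epq.
destruct (leqd HY Hp Hq Hr Hs E1 E2) as [[_ H]|[[k [Hk [F1 _]]]|[k [Hk [F1 _]]]]]; auto.
- exfalso. assert (Hw : weq p (concat p (concat (letter a) k))) by (eapply weq_trans; eauto).
  exact (weq_absorb Hp Hw (inl tt)).
- exfalso. assert (Hw : weq q (concat q (concat (letter b) k))) by (eapply weq_trans; [apply weq_sym; exact Epq|exact F1]).
  exact (weq_absorb Hq Hw (inl tt)).
Qed.

Lemma is_word_cl (a : L) r : is_word r -> is_word (concat (letter a) r).
Proof. intros; apply is_word_concat; auto; apply is_word_letter. Qed.

End Gen5.

Ltac str6 := split; [|split; [|split; [|split; [|split]]]].
Section Lex5.
Context {d : Order.disp_t} {A : orderType d}.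
Implicit Types x y z : rword A.

Lemma str_weq x x' y y' : weq x x' -> weq y y' -> str_lt x y -> str_lt x' y'.
Proof.
intros E1 E2 [p [r [r' [a [b [Hp [Hr [Hr' [Hab [F1 F2]]]]]]]]]].
exists p, r, r', a, b. str6; auto.
- eapply weq_trans; [apply weq_sym; eauto|auto].
- eapply weq_trans; [apply weq_sym; eauto|auto].
Qed.

Lemma prefix_weq x x' y y' : weq x x' -> weq y y' -> wprefix x y -> wprefix x' y'.
Proof.
intros E1 E2 [s [Hs F]]. exists s; split; auto.
eapply weq_trans; [apply weq_sym; eauto|]. eapply weq_trans; [exact F|].
apply concat_congr; auto. apply weq_refl.
Qed.

Lemma lex_weq x x' y y' : weq x x' -> weq y y' -> lex_le x y -> lex_le x' y'.
Proof.
intros E1 E2 [H|H]; [left; eapply prefix_weq; eauto|right; eapply str_weq; eauto].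
Qed.

Lemma prefix_refl x : wprefix x x.
Proof.
exists wempty. split; [apply is_word_empty, empty_wempty|].
apply weq_sym, concat_empty_r, empty_wempty.
Qed.

Lemma lex_refl x : lex_le x x.
Proof. left; apply prefix_refl. Qed.

Lemma lex_of_weq x y : weq x y -> lex_le x y.
Proof. intros E. eapply lex_weq; [apply weq_refl|exact E|apply lex_refl]. Qed.

Lemma str_irrefl x : is_word x -> ~ str_lt x x.
Proof.
intros Hx [p [r [r' [a [b [Hp [Hr [Hr' [Hab [F1 F2]]]]]]]]]].
destruct (leqd_same Hx Hp Hp Hr Hr' F1 F2 (weq_refl _)) as [E _]. subst.
by rewrite Order.POrderTheory.ltxx in Hab.
Qed.

Lemma str_trans x y z : is_word y -> str_lt x y -> lex_le y z -> str_lt x z.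
Proof.
intros Hy [p [r [r' [a [b [Hp [Hr [Hr' [Hab [F1 F2]]]]]]]]]] [[s [Hs G]]|[q [t [t' [c [e [Hq [Ht [Ht' [Hce [G1 G2]]]]]]]]]]].
- exists p, r, (concat r' s), a, b. str6; auto.
  + apply is_word_concat; auto.
  + eapply weq_trans; [exact G|]. eapply weq_trans; [apply concat_congr; [exact F2|apply weq_refl]|].
    eapply weq_trans; [apply concat_assoc|]. apply concat_congr; [apply weq_refl|]. apply concat_assoc.
- destruct (leqd Hy Hp Hq Hr' Ht F2 G1) as [[K1 [K2 K3]]|[[k [Hk [K1 K2]]]|[k [Hk [K1 K2]]]]].
  + subst. exists p, r, t', a, e. str6; auto.
    * eapply Order.POrderTheory.lt_trans; eauto.
    * eapply weq_trans; [exact G2|]. apply concat_congr; [apply weq_sym; auto|apply weq_refl].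
  + exists p, r, (concat k (concat (letter e) t')), a, b. str6; auto.
    * apply is_word_concat; auto. apply is_word_cl; auto.
    * eapply weq_trans; [exact G2|]. eapply weq_trans; [apply concat_congr; [exact K1|apply weq_refl]|].
      eapply weq_trans; [apply concat_assoc|]. apply concat_congr; [apply weq_refl|].
      eapply weq_trans; [apply concat_assoc|]. apply weq_refl.
  + exists q, (concat k (concat (letter a) r)), t', c, e. str6; auto.
    * apply is_word_concat; auto. apply is_word_cl; auto.
    * eapply weq_trans; [exact F1|]. eapply weq_trans; [apply concat_congr; [exact K1|apply weq_refl]|].
      eapply weq_trans; [apply concat_assoc|]. apply concat_congr; [apply weq_refl|].
      eapply weq_trans; [apply concat_assoc|]. apply weq_refl.
Qed.

Lemma prefix_trans x y z : is_word x -> wprefix x y -> wprefix y z -> wprefix x z.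
Proof.
intros Hx [s [Hs E1]] [t [Ht E2]]. exists (concat s t). split; [apply is_word_concat; auto|].
eapply weq_trans; [exact E2|]. eapply weq_trans; [apply concat_congr; [exact E1|apply weq_refl]|].
apply concat_assoc.
Qed.

Lemma lex_trans x y z : is_word x -> is_word y -> lex_le x y -> lex_le y z -> lex_le x z.
Proof.
intros Hx Hy [H1|H1] H2.
- destruct H2 as [H2|H2]; [left; eapply prefix_trans; eauto|].
  destruct H1 as [s [Hs E1]].
  destruct H2 as [q [t0 [t' [c [e [Hq [Ht0 [Ht' [Hce [G1 G2]]]]]]]]]].
  destruct (eqd Hy Hx Hs Hq (is_word_cl c Ht0) E1 G1) as [[k [Hk [K1 K2]]]|[k [Hk [K1 K2]]]].
  + left. exists (concat k (concat (letter e) t')). split; [apply is_word_concat; auto; apply is_word_cl; auto|].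
    eapply weq_trans; [exact G2|]. eapply weq_trans; [apply concat_congr; [exact K1|apply weq_refl]|].
    apply concat_assoc.
  + destruct (classic (inhabited (pos k))) as [Hne|He].
    * right. destruct (head_letter Ht0 Hk Hs K2 Hne) as [k1 [Hk1 [M1 M2]]].
      exists q, k1, t', c, e. str6; auto.
      eapply weq_trans; [exact K1|]. apply concat_congr; auto. apply weq_refl.
    * assert (Ek : empty k) by (intros zz; apply He; constructor; auto).
      left. exists (concat (letter e) t'). split; [apply is_word_cl; auto|].
      eapply weq_trans; [exact G2|]. apply concat_congr; [|apply weq_refl].
      apply weq_sym. eapply weq_trans; [exact K1|]. apply concat_empty_r; auto.
- right. eapply str_trans; eauto.
Qed.

Lemma lex_antisym x y : is_word x -> is_word y -> lex_le x y -> lex_le y x -> weq x y.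
Proof.
intros Hx Hy [H1|H1] H2.
- destruct H2 as [H2|H2].
  + destruct H1 as [s [Hs E1]]. destruct H2 as [t [Ht E2]].
    assert (E : weq x (concat x (concat s t))).
    { eapply weq_trans; [exact E2|]. eapply weq_trans; [apply concat_congr; [exact E1|apply weq_refl]|].
      apply concat_assoc. }
    assert (Hst := weq_absorb Hx E). destruct (empty_concat Hst) as [Es _].
    apply weq_sym. eapply weq_trans; [exact E1|]. apply concat_empty_r; auto.
  + exfalso. apply (str_irrefl Hy). apply (str_trans (y:=x)); [exact Hx|exact H2|left; exact H1].
- exfalso. apply (str_irrefl Hx). apply (str_trans (y:=y)); [exact Hy|exact H1|exact H2].
Qed.

Lemma lex_mul_l p x y : is_word p -> lex_le x y -> lex_le (concat p x) (concat p y).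
Proof.
intros Hp [[s [Hs E]]|[q [r [r' [a [b [Hq [Hr [Hr' [Hab [F1 F2]]]]]]]]]]].
- left. exists s. split; auto. eapply weq_trans; [apply concat_congr; [apply weq_refl|exact E]|].
  apply weq_sym, concat_assoc.
- right. exists (concat p q), r, r', a, b. str6; auto.
  + apply is_word_concat; auto.
  + eapply weq_trans; [apply concat_congr; [apply weq_refl|exact F1]|]. apply weq_sym, concat_assoc.
  + eapply weq_trans; [apply concat_congr; [apply weq_refl|exact F2]|]. apply weq_sym, concat_assoc.
Qed.

Lemma trichotomy x y : is_word x -> is_word y ->
  wprefix x y \/ wprefix y x \/ str_lt x y \/ str_lt y x.
Proof.
intros Hx Hy. destruct (cmp_gen Hx Hy) as [H|[H|[p [r [r' [a [b [Hp [Hr [Hr' [Hab [E1 E2]]]]]]]]]]]]; auto.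
right; right. assert (Hn : a != b) by (apply/eqP; auto).
case/orP: (Order.TotalTheory.lt_total Hn) => H.
- left. exists p, r, r', a, b. str6; auto.
- right. exists p, r', r, b, a. str6; auto.
Qed.

End Lex5.

Section Gen6.
Variable L : Type.
Implicit Types x y : rword L.

Lemma sub_absorb x (P : pos x -> Prop) (t : rword L) : is_word x -> weq (sub x P) (concat x t) -> empty t.
Proof.
intros Hx E. apply weq_sym in E. destruct E as [f [g [H1 [H2 [H3 H4]]]]].
apply (@no_absorb _ x t (fun s => proj1_sig (f s)) Hx). intros a b Hab. apply H3 in Hab. exact Hab.
Qed.

Lemma sfx_first x (c : pos x) : is_word x -> (forall c', ~ plt c' c) -> weq (sfx x c) x.
Proof.
intros Hx Hc. eapply weq_trans; [|apply sub_allw; auto]. apply sub_ext; auto. intros z; split; auto.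
Qed.

Lemma pre_first_empty x (c : pos x) : (forall c', ~ plt c' c) -> empty (pre x c).
Proof. intros Hc [z h]. exact (Hc z h). Qed.

Lemma first_decomp x (c : pos x) : is_word x -> (forall c', ~ plt c' c) ->
  weq x (concat (letter (lbl c)) (sfxs x c)).
Proof.
intros Hx Hc. eapply weq_trans; [apply weq_sym, sfx_first; eauto|]. apply sfx_letter; auto.
Qed.

Lemma is_word_sfx x (c : pos x) : is_word x -> is_word (sfx x c).
Proof. intros; apply is_word_sub; auto. Qed.
Lemma is_word_pre x (c : pos x) : is_word x -> is_word (pre x c).
Proof. intros; apply is_word_sub; auto. Qed.
Lemma is_word_sfxs x (c : pos x) : is_word x -> is_word (sfxs x c).
Proof. intros; apply is_word_sub; auto. Qed.

Lemma proper_suffix_at x (c c' : pos x) : is_word x -> plt c' c -> proper_suffix (sfx x c) x.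
Proof.
intros Hx Hlt. exists (pre x c). split; [apply is_word_pre; auto|split; [|split]].
- constructor. exists c'. exact Hlt.
- constructor. exists c. apply (w_irr Hx).
- apply split_pre; auto.
Qed.

Lemma proper_suffix_weq x x' z : proper_suffix z x -> weq x x' -> proper_suffix z x'.
Proof.
intros [y [Hy [H1 [H2 E]]]] E'. exists y. split; auto. split; auto. split; auto.
eapply weq_trans; [apply weq_sym; exact E'|exact E].
Qed.

Lemma sub_le_e (J : cordinal) (e : pos J) : is_word J ->
  weq (sub J (fun e' => ~ plt e e')) (concat (pre J e) (letter tt)).
Proof.
intros HJ. apply weq_sym. eapply weq_trans; [|apply (@sub_split _ J _ (fun z => plt z e) (fun z => z = e)); auto].
- apply concat_congr; [apply weq_refl|].
  apply (@weq_ms _ (letter tt) (sub J (fun z => z = e)) (fun _ => exist (fun z => z = e) e (erefl e))).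
  + apply is_word_letter.
  + apply is_word_sub; auto.
  + intros [] [] [].
  + intros [z h]. exists tt. apply sig_eq; simpl; auto.
  + intros []. simpl. destruct (lbl e); auto.
- intros z; split.
  + intros H. destruct (w_tot HJ z e) as [H'|[H'|H']]; auto. tauto.
  + intros [H|H]; subst; [intros H'; exact (w_irr HJ (w_tr HJ H H'))|apply (w_irr HJ)].
- intros z H1 H2; subst; exact (w_irr HJ H1).
- intros a b H1 H2; subst; auto.
Qed.

Lemma sub_sub_le (E : cordinal) (P : pos E -> Prop) (e : pos (sub E P)) : is_word E ->
  (forall a b, P b -> plt a b -> P a) ->
  weq (sub (sub E P) (fun e' => ~ plt e e')) (sub E (fun z => ~ plt (proj1_sig e) z)).
Proof.
intros HE HP.
apply (@weq_ms _ (sub (sub E P) (fun e' => ~ plt e e')) (sub E (fun z => ~ plt (proj1_sig e) z)) (fun s => exist (fun z => ~ plt (proj1_sig e) z) (proj1_sig (proj1_sig s)) (proj2_sig s))).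
- apply is_word_sub, is_word_sub; auto.
- apply is_word_sub; auto.
- intros [[a ha] ha'] [[b hb] hb']; simpl; auto.
- intros [z h]. destruct e as [e he]; simpl in h.
  assert (Pz : P z).
  { destruct (w_tot HE z e) as [H|[H|H]]; [eapply HP; eauto|subst; auto|tauto]. }
  exists (exist _ (exist _ z Pz) h). apply sig_eq; auto.
- auto.
Qed.

Lemma wpow_letter (u : rword L) (t : unit) : weq (wpow u (letter t)) u.
Proof. apply (@wpow_single _ u (letter t) tt); [intros []; auto|apply is_word_letter]. Qed.

End Gen6.

Lemma ord_cmp (b : cordinal) (P : pos b -> Prop) : is_word b ->
  exists rho, is_word rho /\ weq b (concat (sub b P) rho).
Proof.
intros Hb. destruct (cmp_gen (is_word_sub P Hb) Hb) as [[s [Hs E]]|[[s [Hs E]]|[pw [r [r' [a0 [b0 [_ [_ [_ [Hab _]]]]]]]]]]].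
- exists s; auto.
- exists wempty. split; [apply is_word_empty, empty_wempty|].
  assert (Es := sub_absorb Hb E).
  apply weq_sym. eapply weq_trans; [apply concat_empty_r, empty_wempty|].
  eapply weq_trans; [exact E|]. apply concat_empty_r; auto.
- exfalso; destruct a0, b0; auto.
Qed.



Section Lex6.
Context {d : Order.disp_t} {A : orderType d}.
Implicit Types x y z w Y R : rword A.

Lemma prime_nonempty w : is_word w -> prime_word w -> inhabited (pos w).
Proof.
intros Hw [Hprim _]. destruct (classic (inhabited (pos w))) as [|Hn]; auto. exfalso.
assert (Ew : empty w) by (intros a; apply Hn; constructor; auto).
destruct (Hprim w (@wempty unit) Hw (is_word_empty (@empty_wempty unit))) as [E _].
- apply weq_empty; auto. apply wpow_empty, empty_wempty.
- destruct E as [f [g _]]. destruct (g tt).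
Qed.

Lemma prime_sfx w Y (c c' : pos Y) : prime_word w -> is_word w -> weq w Y -> is_word Y ->
  plt c' c -> lex_le w (sfx Y c).
Proof.
intros [_ Hp] Hw E HY Hlt. apply Hp; [apply is_word_sfx; auto|].
apply proper_suffix_weq with Y; [eapply proper_suffix_at; eauto|apply weq_sym; auto].
Qed.

Lemma prime_sfx_all w (c : pos w) : prime_word w -> is_word w -> lex_le w (sfx w c).
Proof.
intros Pw Hw. destruct (classic (exists c', plt c' c)) as [[c' Hc']|Hn].
- eapply prime_sfx; eauto. apply weq_refl.
- apply lex_of_weq. apply weq_sym, sfx_first; auto. intros c' H; apply Hn; eauto.
Qed.

Lemma str_app x y R (R' : rword A) : is_word R -> is_word R' -> str_lt x y -> str_lt (concat x R) (concat y R').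
Proof.
intros HR HR' [p [r [r' [a [b [Hp [Hr [Hr' [Hab [F1 F2]]]]]]]]]].
exists p, (concat r R), (concat r' R'), a, b. str6; auto.
- apply is_word_concat; auto.
- apply is_word_concat; auto.
- eapply weq_trans; [apply concat_congr; [exact F1|apply weq_refl]|].
  eapply weq_trans; [apply concat_assoc|]. apply concat_congr; [apply weq_refl|apply concat_assoc].
- eapply weq_trans; [apply concat_congr; [exact F2|apply weq_refl]|].
  eapply weq_trans; [apply concat_assoc|]. apply concat_congr; [apply weq_refl|apply concat_assoc].
Qed.

End Lex6.

Section Main.
Context {d : Order.disp_t} {A : orderType d}.
Variables u v : rword A.
Hypothesis Hu : is_word u.
Hypothesis Hv : is_word v.
Hypothesis Pu : prime_word u.
Hypothesis Pv : prime_word v.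
Hypothesis Luv : lex_lt u v.

Definition Wv (I : cordinal) := concat (wpow u I) v.

Lemma is_word_Wv I : is_word I -> is_word (Wv I).
Proof. intros; apply is_word_concat; auto; apply is_word_wpow; auto. Qed.

Lemma Wv_congr I I' : weq I I' -> weq (Wv I) (Wv I').
Proof. intros E; apply concat_congr; [apply wpow_congr_r; auto|apply weq_refl]. Qed.

Lemma un : inhabited (pos u). Proof. apply prime_nonempty; auto. Qed.
Lemma vn : inhabited (pos v). Proof. apply prime_nonempty; auto. Qed.

Lemma not_pow_v (J : cordinal) : is_word J -> weq v (wpow u J) -> False.
Proof.
intros HJ E. destruct Pv as [Hp _]. destruct (Hp u J Hu HJ E) as [_ E'].
destruct Luv as [_ H]. exact (H E').
Qed.

Lemma v_le_u_contra : lex_le v u -> False.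
Proof. intros H. destruct Luv as [H1 H2]. apply H2. apply lex_antisym; auto. Qed.

Lemma ne_of_inh (x : rword A) : ~ inhabited (pos x) -> empty x.
Proof. intros H a; apply H; constructor; auto. Qed.

Lemma uv_le_v : lex_le (concat u v) v.
Proof.
destruct Luv as [[[s [Hs E]]|H] Hn].
- destruct (classic (inhabited (pos s))) as [Hs'|Hs'].
  + assert (Hvs : lex_le v s).
    { destruct Pv as [_ Hp]. apply Hp; auto. exists u. split; auto. split; [apply un|split; auto]. }
    apply lex_weq with (concat u v) (concat u s); [apply weq_refl|apply weq_sym; auto|].
    apply lex_mul_l; auto.
  + exfalso. apply Hn. apply weq_sym. eapply weq_trans; [exact E|]. apply concat_empty_r, ne_of_inh; auto.
- right. eapply str_weq; [apply weq_refl| |apply (str_app Hv (is_word_empty (@empty_wempty A)) H)].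
  apply concat_empty_r, empty_wempty.
Qed.

Lemma SC (e t : rword A) : is_word e -> is_word t -> weq v (concat e t) -> str_lt t v -> False.
Proof.
intros He Ht E H.
destruct (classic (inhabited (pos e))) as [He'|He'].
- destruct (classic (inhabited (pos t))) as [Ht'|Ht'].
  + assert (Hvt : lex_le v t).
    { destruct Pv as [_ Hp]. apply Hp; auto. exists e. split; auto. }
    apply (str_irrefl Ht). apply (str_trans (y:=v)); [exact Hv|exact H|exact Hvt].
  + destruct H as [p [r [r' [a [b [Hp [Hr [Hr' [Hab [F1 F2]]]]]]]]]].
    apply Ht'. destruct F1 as [f [g _]]. constructor. exact (g (inr (inl tt))).
- apply (str_irrefl Ht). eapply str_weq; [apply weq_refl| |exact H].
  eapply weq_trans; [exact E|]. apply concat_empty_l, ne_of_inh; auto.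
Qed.

Lemma LL (J : cordinal) : is_word J ->
  (forall e : pos J, lex_le (Wv (sub J (fun e' => ~ plt e e'))) v) -> lex_le (Wv J) v.
Proof.
intros HJ IH.
assert (Heps : is_word (wpow u J)) by (apply is_word_wpow; auto).
assert (HW : is_word (Wv J)) by (apply is_word_Wv; auto).
destruct (trichotomy HW Hv) as [H|[H|[H|H]]].
- left; auto.
- destruct H as [s [Hs E]].
  destruct (eqd HW Heps Hv Hv Hs (weq_refl _) E) as [[k [Hk [E1 E2]]]|[k [Hk [E1 E2]]]].
  + assert (Kv : weq k v).
    { destruct (classic (inhabited (pos (wpow u J)))) as [Hne|He].
      - destruct (classic (inhabited (pos k))) as [Hk'|Hk'].
        + apply lex_antisym; auto.
          * left. exists s; split; auto.
          * destruct Pv as [_ Hp]. apply Hp; auto. exists (wpow u J). split; auto.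
        + exfalso. apply (not_pow_v HJ). eapply weq_trans; [exact E1|]. apply concat_empty_r, ne_of_inh; auto.
      - apply weq_sym. eapply weq_trans; [exact E1|]. apply concat_empty_l, ne_of_inh; auto. }
    assert (Es : empty s).
    { apply (weq_absorb Hv). eapply weq_trans; [exact E2|]. apply concat_congr; auto. apply weq_refl. }
    apply lex_of_weq. eapply weq_trans; [exact E|]. apply concat_empty_r; auto.
  + exfalso.
    destruct (classic (inhabited (pos k))) as [Hk'|Hk'].
    * destruct (decomp_pos Heps Hv Hk E1 Hk') as [[e q] [Ev _]].
      assert (Ev' := weq_trans Ev (pre_wpow e q Hu HJ)).
      assert (HP : is_word (wpow u (pre J e))) by (apply is_word_wpow; auto; apply is_word_pre; auto).
      destruct (classic (inhabited (pos (pre u q)))) as [Hq|Hq].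
      -- apply v_le_u_contra.
         assert (Hu'' : lex_le (pre u q) u).
         { left. exists (sfx u q). split; [apply is_word_sfx; auto|apply split_pre; auto]. }
         destruct (classic (inhabited (pos (wpow u (pre J e))))) as [Hw|Hw].
         ++ apply lex_trans with (pre u q); auto; [apply is_word_pre; auto|].
            destruct Pv as [_ Hp]. apply Hp; [apply is_word_pre; auto|].
            exists (wpow u (pre J e)). split; auto.
         ++ apply lex_trans with (pre u q); auto; [apply is_word_pre; auto|].
            apply lex_of_weq. eapply weq_trans; [exact Ev'|]. apply concat_empty_l, ne_of_inh; auto.
      -- apply (not_pow_v (J := pre J e)); [apply is_word_pre; auto|].
         eapply weq_trans; [exact Ev'|]. apply concat_empty_r, ne_of_inh; auto.
    * apply (not_pow_v HJ). apply weq_sym. eapply weq_trans; [exact E1|]. apply concat_empty_r, ne_of_inh; auto.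
- right; auto.
- exfalso.
  destruct H as [p [r [r' [a [b [Hp [Hr [Hr' [Hab [F1 F2]]]]]]]]]].
  assert (Hbr := is_word_cl b Hr'). assert (Har := is_word_cl a Hr).
  destruct (eqd HW Heps Hv Hp Hbr (weq_refl _) F2) as [[k [Hk [E1 E2]]]|[k [Hk [E1 E2]]]].
  + (* p = eps k, v = k b r' *)
    apply (@SC (wpow u J) (concat k (concat (letter a) r))); auto.
    * apply is_word_concat; auto.
    * eapply weq_trans; [exact F1|]. eapply weq_trans; [apply concat_congr; [exact E1|apply weq_refl]|].
      apply concat_assoc.
    * exists k, r, r', a, b. str6; auto. apply weq_refl.
  + destruct (classic (inhabited (pos k))) as [Hk'|Hk'].
    * destruct (head_letter Hr' Hk Hv E2 Hk') as [k1 [Hk1 [K1 K2]]].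
      assert (Ep : weq (wpow u J) (concat p (concat (letter b) k1))).
      { eapply weq_trans; [exact E1|]. apply concat_congr; auto. apply weq_refl. }
      destruct (decomp_pos Heps Hp (is_word_cl b Hk1) Ep (inhabits (inl tt))) as [[e q] [Gp Gs]].
      assert (Gs' := weq_trans Gs (sfx_wpow e q Hu HJ)).
      assert (Hsq : is_word (sfxs u q)) by (apply is_word_sfxs; auto).
      assert (HsJ : is_word (wpow u (sfxs J e))) by (apply is_word_wpow; auto; apply is_word_sfxs; auto).
      assert (Gs'' : weq (concat (letter b) k1) (concat (letter (lbl q)) (concat (sfxs u q) (wpow u (sfxs J e))))).
      { eapply weq_trans; [exact Gs'|]. eapply weq_trans; [apply concat_congr; [apply sfx_letter; auto|apply weq_refl]|].
        apply concat_assoc. }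
      destruct (first_letter Hk1 (is_word_concat Hsq HsJ) Gs'') as [Eb _].
      assert (Hle := IH e).
      assert (HJe : is_word (pre J e)) by (apply is_word_pre; auto).
      assert (EW : weq (Wv (sub J (fun e' => ~ plt e e'))) (concat p (concat (letter b) (concat (sfxs u q) v)))).
      { unfold Wv.
        eapply weq_trans; [apply concat_congr; [apply wpow_congr_r, sub_le_e; auto|apply weq_refl]|].
        eapply weq_trans; [apply concat_congr; [apply wpow_concat|apply weq_refl]|].
        eapply weq_trans; [apply concat_congr; [apply concat_congr; [apply weq_refl|apply wpow_letter]|apply weq_refl]|].
        eapply weq_trans; [apply concat_congr; [apply concat_congr; [apply weq_refl|apply split_pre with (c := q); auto]|apply weq_refl]|].
        eapply weq_trans; [apply concat_congr; [apply weq_sym, concat_assoc|apply weq_refl]|].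
        eapply weq_trans; [apply concat_congr; [apply concat_congr; [apply weq_sym, pre_wpow; auto|apply sfx_letter; auto]|apply weq_refl]|].
        eapply weq_trans; [apply concat_assoc|].
        apply concat_congr; [apply weq_sym; auto|]. rewrite Eb.
        apply concat_assoc. }
      apply (str_irrefl Hv). apply str_trans with (Wv (sub J (fun e' => ~ plt e e'))).
      -- apply is_word_Wv, is_word_sub; auto.
      -- exists p, r, (concat (sfxs u q) v), a, b. str6; auto. apply is_word_concat; auto.
      -- auto.
    *
      assert (Ek := ne_of_inh Hk').
      apply (@SC (wpow u J) (concat (letter a) r)); auto.
      -- eapply weq_trans; [exact F1|]. apply concat_congr; [|apply weq_refl].
         apply weq_sym. eapply weq_trans; [exact E1|]. apply concat_empty_r; auto.
      -- exists wempty, r, r', a, b. str6; auto.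
         ++ apply is_word_empty, empty_wempty.
         ++ apply weq_sym, concat_empty_l, empty_wempty.
         ++ eapply weq_trans; [|apply weq_sym, concat_empty_l, empty_wempty].
            apply weq_sym. eapply weq_trans; [exact E2|]. apply concat_empty_l; auto.
Qed.

Lemma B (E : cordinal) : is_word E -> lex_le (Wv E) v.
Proof.
intros HE.
assert (S : forall c : pos E, lex_le (Wv (sub E (fun z => ~ plt c z))) v).
{ intros c; pattern c; apply (well_founded_ind (w_wf HE)). intros c0 IH.
  assert (HP : is_word (pre E c0)) by (apply is_word_pre; auto).
  assert (HPw : is_word (wpow u (pre E c0))) by (apply is_word_wpow; auto).
  apply lex_weq with (concat (wpow u (pre E c0)) (concat u v)) v; [|apply weq_refl|].
  - unfold Wv. apply weq_sym.
    eapply weq_trans; [apply concat_congr; [apply wpow_congr_r, sub_le_e; auto|apply weq_refl]|].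
    eapply weq_trans; [apply concat_congr; [apply wpow_concat|apply weq_refl]|].
    eapply weq_trans; [apply concat_congr; [apply concat_congr; [apply weq_refl|apply wpow_letter]|apply weq_refl]|].
    apply concat_assoc.
  - apply lex_trans with (Wv (pre E c0)).
    + apply is_word_concat; auto. apply is_word_concat; auto.
    + apply is_word_Wv; auto.
    + apply lex_mul_l; auto. apply uv_le_v.
    + apply LL; auto. intros e.
      eapply lex_weq; [apply Wv_congr, weq_sym, sub_sub_le; auto| apply weq_refl|].
      * intros a0 b0 H1 H2. eapply (w_tr HE); eauto.
      * apply IH. exact (proj2_sig e). }
apply LL; auto.
Qed.

End Main.

Section Final.
Context {d : Order.disp_t} {A : orderType d}.
Variables u v : rword A.
Hypothesis Hu : is_word u.
Hypothesis Hv : is_word v.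
Hypothesis Pu : prime_word u.
Hypothesis Pv : prime_word v.
Hypothesis Luv : lex_lt u v.
Variable alpha : cordinal.
Hypothesis Ha : is_word alpha.

Let w := Wv u v alpha.
Let Hw : is_word w := is_word_Wv Hu Hv Ha.
Let B' := B Hu Hv Pu Pv Luv.

Lemma sfx_cases (q : pos u) : weq (sfx u q) u \/ str_lt u (sfx u q).
Proof.
destruct (prime_sfx_all q Pu Hu) as [[t [Ht E]]|H]; auto.
left. assert (Et := sub_absorb Hu E). eapply weq_trans; [exact E|]. apply concat_empty_r; auto.
Qed.

Lemma w_suffix (c : pos w) : lex_le w (sfx w c).
Proof.
assert (Hwa : is_word (wpow u alpha)) by (apply is_word_wpow; auto).
destruct c as [[e q]|q].
- eapply lex_weq; [apply weq_refl|apply weq_sym, sfx_concat_l; auto|].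
  eapply lex_weq; [apply weq_refl|apply concat_congr; [apply weq_sym, sfx_wpow; auto|apply weq_refl]|].
  assert (Hse : is_word (wpow u (sfxs alpha e))) by (apply is_word_wpow; auto; apply is_word_sfxs; auto).
  destruct (sfx_cases q) as [Eq|Sq].
  +
    eapply lex_weq; [apply weq_refl|apply concat_congr; [apply concat_congr; [apply weq_sym; exact Eq|apply weq_refl]|apply weq_refl]|].
    assert (Es : weq (wpow u (sfx alpha e)) (concat u (wpow u (sfxs alpha e)))).
    { eapply weq_trans; [apply wpow_congr_r, sfx_letter; auto|].
      eapply weq_trans; [apply wpow_concat|]. apply concat_congr; [apply wpow_letter|apply weq_refl]. }
    eapply lex_weq; [apply weq_refl|apply concat_congr; [exact Es|apply weq_refl]|].
    destruct (ord_cmp (fun z => ~ plt z e) Ha) as [rho [Hrho Er]].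
    assert (Hsa : is_word (wpow u (sfx alpha e))) by (apply is_word_wpow; auto; apply is_word_sfx; auto).
    assert (Hrw : is_word (wpow u rho)) by (apply is_word_wpow; auto).
    eapply lex_weq; [|apply weq_refl|].
    + apply weq_sym. unfold w, Wv.
      eapply weq_trans; [apply concat_congr; [apply wpow_congr_r; exact Er|apply weq_refl]|].
      eapply weq_trans; [apply concat_congr; [apply wpow_concat|apply weq_refl]|].
      apply concat_assoc.
    + apply lex_mul_l; auto. apply B'; auto.
  +
    right.
    assert (Hne : exists e0, True) by (exists e; auto).
    destruct (w_min Ha Hne) as [e0 [_ He0]].
    assert (Ew : weq w (concat u (concat (wpow u (sfxs alpha e0)) v))).
    { unfold w, Wv. eapply weq_trans; [apply concat_congr; [apply wpow_congr_r, first_decomp; eauto|apply weq_refl]|].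
      eapply weq_trans; [apply concat_congr; [apply wpow_concat|apply weq_refl]|].
      eapply weq_trans; [apply concat_congr; [apply concat_congr; [apply wpow_letter|apply weq_refl]|apply weq_refl]|].
      apply concat_assoc. }
    eapply str_weq; [apply weq_sym; exact Ew|apply weq_sym, concat_assoc|].
    apply str_app; auto.
    * apply is_word_concat; auto. apply is_word_wpow; auto. apply is_word_sfxs; auto.
    * apply is_word_concat; auto.
- eapply lex_weq; [apply weq_refl|apply weq_sym, sfx_concat_r; auto|].
  apply (lex_trans (y := v)); [exact Hw|exact Hv|apply B'; auto|apply prime_sfx_all; auto].
Qed.

Lemma w_sfx_Y (Y : rword A) (c : pos Y) : weq w Y -> is_word Y -> lex_le w (sfx Y c).
Proof.
intros E HY.
assert (E' : weq w (concat (pre Y c) (sfx Y c))) by (eapply weq_trans; [exact E|apply split_pre; auto]).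
destruct (decomp_pos Hw (is_word_pre c HY) (is_word_sfx c HY) E' (inhabits (exist _ c (@w_irr _ Y HY c))))
  as [c' [_ Ec]].
eapply lex_weq; [apply weq_refl|apply weq_sym; exact Ec|]. apply w_suffix.
Qed.

Lemma w_prime_suffix (z : rword A) : is_word z -> proper_suffix z w -> lex_le w z.
Proof.
intros Hz [y [Hy [Hyn [Hzn E]]]].
destruct (decomp_pos Hw Hy Hz E Hzn) as [c [_ Ec]].
eapply lex_weq; [apply weq_refl|apply weq_sym; exact Ec|]. apply w_suffix.
Qed.

Lemma one_single (b : cordinal) (b0 b1 : pos b) : weq b ord_one -> b0 = b1.
Proof.
intros [f [g [H1 _]]]. rewrite <- (H1 b0), <- (H1 b1). destruct (f b0), (f b1); auto.
Qed.

Lemma w_primitive : primitive w.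
Proof.
intros y beta Hy Hb E.
set Y := wpow y beta.
assert (HY : is_word Y) by (apply is_word_wpow; auto).
destruct (classic (inhabited (pos alpha))) as [[a0]|Han].
2:{ assert (Ewv : weq w v).
    { unfold w, Wv. apply concat_empty_l. apply wpow_empty. intros a; apply Han; constructor; auto. }
    pose proof (proj1 Pv) as Hp. destruct (Hp y beta Hy Hb (weq_trans (weq_sym Ewv) E)) as [E1 E2].
    split; auto. eapply weq_trans; [exact E2|apply weq_sym; auto]. }
destruct (vn Hv Pv) as [v0].
destruct (w_min Hv (P := fun _ => True) (ex_intro _ v0 I)) as [vm [_ Hvm]].
assert (Hvm' : forall c', ~ plt c' vm) by (intros c' H; exact (Hvm c' I H)).
(* v sits in Y *)
assert (Ewv : weq w (concat (pre w (inr vm)) v)).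
{ eapply weq_trans; [apply split_pre|]; auto. apply concat_congr; [apply weq_refl|].
  eapply weq_trans; [apply sfx_concat_r; auto; apply is_word_wpow; auto|]. apply sfx_first; auto. }
assert (Hpw : is_word (pre w (inr vm))) by (apply is_word_pre; auto).
destruct (decomp_pos HY Hpw Hv (weq_trans (weq_sym E) Ewv) (inhabits v0)) as [[b q] [_ Ev]].
assert (Ev' := weq_trans Ev (sfx_wpow b q Hy Hb)).
destruct (w_min Hb (P := fun _ => True) (ex_intro _ b I)) as [b0 [_ Hb0]].
assert (Hb0' : forall c', ~ plt c' b0) by (intros c' H; exact (Hb0 c' I H)).
destruct (w_min Hy (P := fun _ => True) (ex_intro _ q I)) as [y0 [_ Hy0]].
assert (Hy0' : forall c', ~ plt c' y0) by (intros c' H; exact (Hy0 c' I H)).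
destruct (classic (forall b1 : pos beta, b1 = b0)) as [Hsing|Hmany].
{ split.
  - apply (@weq_ms _ beta ord_one (fun _ => tt)); auto.
    + apply is_word_letter.
    + intros b1 b2 H. rewrite (Hsing b1) (Hsing b2) in H. exfalso; exact (w_irr Hb H).
    + intros []. exists b0; auto.
    + intros b1. destruct (lbl b1); auto.
  - apply weq_sym. eapply weq_trans; [exact E|]. apply wpow_single with b0; auto. }
apply not_all_ex_not in Hmany. destruct Hmany as [b1 Hb1].
assert (Hb01 : plt b0 b1).
{ destruct (w_tot Hb b0 b1) as [H|[H|H]]; auto; [subst; tauto|exfalso; exact (Hb0' b1 H)]. }
assert (Hbeta1 : weq beta (concat (letter (lbl b0)) (sfxs beta b0))) by (apply first_decomp; auto).
assert (HYs : weq Y (concat y (wpow y (sfxs beta b0)))).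
{ unfold Y. eapply weq_trans; [apply wpow_congr_r; exact Hbeta1|].
  eapply weq_trans; [apply wpow_concat|]. apply concat_congr; [apply wpow_letter|apply weq_refl]. }
assert (Hys : is_word (wpow y (sfxs beta b0))) by (apply is_word_wpow; auto; apply is_word_sfxs; auto).
destruct (classic (exists e, plt b e)) as [He|Hmax].
- (* v's block is not the last one *)
  set Z := wpow y (sfxs beta b).
  assert (HZ : is_word Z) by (apply is_word_wpow; auto; apply is_word_sfxs; auto).
  destruct (w_min Hb He) as [b' [Hbb' Hb'min]].
  assert (EZ : weq Z (sfx Y (b', y0))).
  { apply weq_sym. eapply weq_trans; [apply sfx_wpow; auto|].
    apply weq_sym. unfold Z.
    eapply weq_trans; [apply wpow_congr_r; apply (@sub_ext _ beta _ (fun z => ~ plt z b')); auto|].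
    - intros z; split.
      + intros Hz Hz'. exact (Hb'min z Hz Hz').
      + intros Hz. destruct (w_tot Hb b z) as [H|[H|H]]; auto.
        * subst. exfalso; exact (Hz Hbb').
        * exfalso; apply Hz. eapply (w_tr Hb); eauto.
    - eapply weq_trans; [apply wpow_congr_r, sfx_letter; auto|].
      eapply weq_trans; [apply wpow_concat|]. apply concat_congr; [|apply weq_refl].
      eapply weq_trans; [apply wpow_letter|]. apply weq_sym, sfx_first; auto. }
  assert (HwZ : lex_le w Z) by (eapply lex_weq; [apply weq_refl|apply weq_sym; exact EZ|apply w_sfx_Y; auto]).
  destruct (ord_cmp (fun z => plt b z) Hb) as [rho [Hrho Er]].
  assert (HZw : lex_le Z w).
  { left. exists (wpow y rho). split; [apply is_word_wpow; auto|].
    eapply weq_trans; [exact E|]. unfold Y.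
    eapply weq_trans; [apply wpow_congr_r; exact Er|]. apply wpow_concat. }
  assert (EZw := lex_antisym HZ Hw HZw HwZ).
  assert (HvZ : lex_le v Z).
  { pose proof (proj2 Pv) as Hp. apply Hp; auto. exists (sfx y q). split; [apply is_word_sfx; auto|split; [|split]].
    - constructor. exists q. apply (w_irr Hy).
    - destruct He as [e He]. constructor. exact (exist _ e He, y0).
    - exact Ev'. }
  assert (Evw : weq v w).
  { apply lex_antisym; auto.
    - eapply lex_weq; [apply weq_refl|exact EZw|exact HvZ].
    - apply B'; auto. }
  pose proof (proj1 Pv) as Hp. destruct (Hp y beta Hy Hb (weq_trans Evw E)) as [E1 _].
  exfalso. assert (H := one_single b0 b1 E1). subst. exact (w_irr Hb Hb01).
- (* v's block is the last one *)
  assert (Ey : weq y (sfx Y (b, y0))).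
  { apply weq_sym. eapply weq_trans; [apply sfx_wpow; auto|].
    eapply weq_trans; [apply concat_empty_r|].
    - apply wpow_empty. intros [e h]. apply Hmax; eauto.
    - apply sfx_first; auto. }
  assert (Hwy : lex_le w y) by (eapply lex_weq; [apply weq_refl|apply weq_sym; exact Ey|apply w_sfx_Y; auto]).
  assert (Hyw : lex_le y w).
  { left. exists (wpow y (sfxs beta b0)). split; auto. eapply weq_trans; [exact E|exact HYs]. }
  assert (Eyw := lex_antisym Hy Hw Hyw Hwy).
  assert (Hab := weq_absorb Hw (weq_trans E (weq_trans HYs (concat_congr Eyw (weq_refl _))))).
  exfalso. exact (Hab (exist _ b1 Hb01, y0)).
Qed.

Theorem w_prime : prime_word w.
Proof. split; [apply w_primitive|intros z Hz H; apply w_prime_suffix; auto]. Qed.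

End Final.

Theorem mainTheorem4 (d : Order.disp_t) (A : finOrderType d) (u v : rword A) :
  is_word u -> is_word v -> prime_word u -> prime_word v -> lex_lt u v ->
  forall alpha : cordinal, is_word alpha ->
    prime_word (concat (wpow u alpha) v).
Proof.
intros Hu Hv Pu Pv Luv alpha Ha. exact (w_prime Hu Hv Pu Pv Luv Ha).
Qed.
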